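(* In the setting of the context, let $W(\lambda)=U(x,\lambda)V'(x,\lambda)-U'(x,\lambda)V(x,\lambda)$ (independent of $x\in(0,1)$) for $\lambda\in\mathbb C\setminus\sigma_1$, and let $\sigma_2=\{\lambda\in\mathbb C\setminus\sigma_1: W(\lambda)=0\}$. Then $\sigma_2$ is a discrete subset of $\mathbb R\setminus\sigma_1$. If $\delta_R\delta_B>1$ and $s(\lambda)=\sin(\sqrt\lambda)/\sqrt\lambda=0$, then $\lambda\in\sigma_2$. If $\lambda\in\sigma_2$ and $U(\cdot,\lambda)$ and $V(\cdot,\lambda)$ are not identically zero (which is the case if $s(\lambda)=0$), then $\lambda$ is an eigenvalue of the operator $\mathcal L$ on the tree $\mathcal T$.
   Context: $\mathcal T$ is the infinite biregular tree (vertex classes $\mathcal V_R,\mathcal V_B$, degrees $\delta_R+1$ and $\delta_B+1$, integers $\delta_B,\delta_R\ge1$), each edge identified with $[0,1]$; $\mathcal L$ acts by $-d^2/dx^2$ on $L^2(\mathcal T)=\bigoplus_eL^2(e)$ with domain the functions continuous on $\mathcal T$, $C^1$ on edges with absolutely continuous derivative, second derivative in $L^2$, and $\sum_{e\sim v}\partial_\nu f_e(v)=0$ at every vertex (outward derivatives). With $\omega=\sqrt\lambda$: $c=\cos\omega$, $c'=-\omega\sin\omega$, $s=\sin\omega/\omega$, $s'=\cos\omega$; $M_0=\begin{pmatrix}c&s\\c'&s'\end{pmatrix}$, $J_B=\operatorname{diag}(1,1/\delta_B)$, $J_R=\operatorname{diag}(1,1/\delta_R)$, $T_0(\lambda)=J_RM_0J_BM_0$;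 $\sigma_1=\{\lambda: T_0(\lambda)$ has an eigenvalue of modulus $(\delta_B\delta_R)^{-1/2}\}$, and on $\mathbb C\setminus\sigma_1$, $\mu^-(\lambda)$ is the analytic eigenvalue of $T_0(\lambda)$ with $|\mu^-|<(\delta_B\delta_R)^{-1/2}$. On $[0,1]$: $V(x,\lambda)=sc(1+\tfrac1{\delta_B})\cos(\omega x)+[\mu^--c^2-\tfrac{sc'}{\delta_B}]\tfrac{\sin(\omega x)}{\omega}$, $U(x,\lambda)=-sc(1+\tfrac1{\delta_R})\cos(\omega(1-x))-[\mu^--c^2-\tfrac{sc'}{\delta_R}]\tfrac{\sin(\omega(1-x))}{\omega}$. Fixing an edge $e_0=\{r_0,b_0\}$ ($r_0\in\mathcal V_R$) identified with $[0,1]$, $r_0\leftrightarrow 0$, $V$ extends to the union $\mathcal T_0$ of nonbacktracking rays $r_0,b_0,r_1,\dots$ and $U$ to the union $\mathcal T_1$ of rays $b_0,r_0,b_{-1},\dots$ as square integrable solutions of $-y''=\lambda y$ satisfying the vertex conditions away from $e_0$. *)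

(* Defs.v *)
From Stdlib Require Import Reals List Lia ClassicalEpsilon Factorial.
From Coquelicot Require Import Coquelicot.
Import ListNotations.

Open Scope R_scope.

Definition Cseries (a : nat -> C) : C :=
  (Series (fun n => fst (a n)), Series (fun n => snd (a n))).

(* cosw lam x = cos (sqrt lam * x) = sum_n (-lam)^n x^(2n)/(2n)!  ;
   independent of the branch of the square root. *)
Definition cosw (lam : C) (x : R) : C :=
  Cseries (fun n => Cmult (Cpow (Copp lam) n)
                          (RtoC (x ^ (2 * n) / INR (fact (2 * n))))).

(* sinw lam x = sin (sqrt lam * x) / sqrt lam
              = sum_n (-lam)^n x^(2n+1)/(2n+1)!  (= x when lam = 0). *)
Definition sinw (lam : C) (x : R) : C :=
  Cseries (fun n => Cmult (Cpow (Copp lam) n)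
                          (RtoC (x ^ (2 * n + 1) / INR (fact (2 * n + 1))))).

(* c = cos ω, s = sin ω / ω, c' = -ω sin ω = -λ s, s' = cos ω *)
Definition cc (lam : C) : C := cosw lam 1.
Definition ss (lam : C) : C := sinw lam 1.
Definition ccp (lam : C) : C := Copp (Cmult lam (ss lam)).
Definition ssp (lam : C) : C := cc lam.

(* a 2x2 matrix ((a,b),(c,d)) = [[a, b],[c, d]] *)
Definition mat2 := ((C * C) * (C * C))%type.

Definition m2mul (A B : mat2) : mat2 :=
  let '((a11, a12), (a21, a22)) := A in
  let '((b11, b12), (b21, b22)) := B in
  ((Cplus (Cmult a11 b11) (Cmult a12 b21), Cplus (Cmult a11 b12) (Cmult a12 b22)),
   (Cplus (Cmult a21 b11) (Cmult a22 b21), Cplus (Cmult a21 b12) (Cmult a22 b22))).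

Definition M0 (lam : C) : mat2 := ((cc lam, ss lam), (ccp lam, ssp lam)).

Definition Jd (delta : nat) : mat2 :=
  ((RtoC 1, RtoC 0), (RtoC 0, RtoC (/ INR delta))).

Definition T0 (dB dR : nat) (lam : C) : mat2 :=
  m2mul (Jd dR) (m2mul (M0 lam) (m2mul (Jd dB) (M0 lam))).

Definition is_eig2 (A : mat2) (mu : C) : Prop :=
  let '((a, b), (c, d)) := A in
  Cminus (Cmult (Cminus a mu) (Cminus d mu)) (Cmult b c) = RtoC 0.

Definition bound (dB dR : nat) : R := / sqrt (INR dB * INR dR).

Definition sigma1 (dB dR : nat) (lam : C) : Prop :=
  exists mu, is_eig2 (T0 dB dR lam) mu /\ Cmod mu = bound dB dR.

(* mu^-(lambda): the eigenvalue of T_0(lambda) of modulus < (dB dR)^(-1/2)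
   (unique when lambda is not in sigma_1; arbitrary junk value otherwise). *)
Definition mu_minus (dB dR : nat) (lam : C) : C :=
  epsilon (inhabits (RtoC 0))
    (fun mu => is_eig2 (T0 dB dR lam) mu /\ Cmod mu < bound dB dR).

Definition Vfun (dB dR : nat) (lam : C) (x : R) : C :=
  Cplus (Cmult (Cmult (Cmult (ss lam) (cc lam)) (RtoC (1 + / INR dB))) (cosw lam x))
        (Cmult (Cminus (Cminus (mu_minus dB dR lam) (Cmult (cc lam) (cc lam)))
                       (Cmult (Cmult (ss lam) (ccp lam)) (RtoC (/ INR dB))))
               (sinw lam x)).

Definition Ufun (dB dR : nat) (lam : C) (x : R) : C :=
  Copp (Cplus (Cmult (Cmult (Cmult (ss lam) (cc lam)) (RtoC (1 + / INR dR)))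
                     (cosw lam (1 - x)))
              (Cmult (Cminus (Cminus (mu_minus dB dR lam) (Cmult (cc lam) (cc lam)))
                             (Cmult (Cmult (ss lam) (ccp lam)) (RtoC (/ INR dR))))
                     (sinw lam (1 - x)))).

(* d/dx cos(ωx) = -λ sin(ωx)/ω ,  d/dx (sin(ωx)/ω) = cos(ωx) *)
Definition Vder (dB dR : nat) (lam : C) (x : R) : C :=
  Cplus (Cmult (Cmult (Cmult (ss lam) (cc lam)) (RtoC (1 + / INR dB)))
               (Copp (Cmult lam (sinw lam x))))
        (Cmult (Cminus (Cminus (mu_minus dB dR lam) (Cmult (cc lam) (cc lam)))
                       (Cmult (Cmult (ss lam) (ccp lam)) (RtoC (/ INR dB))))
               (cosw lam x)).

(* d/dx cos(ω(1-x)) = λ sin(ω(1-x))/ω ,  d/dx (sin(ω(1-x))/ω) = -cos(ω(1-x)) *)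
Definition Uder (dB dR : nat) (lam : C) (x : R) : C :=
  Copp (Cplus (Cmult (Cmult (Cmult (ss lam) (cc lam)) (RtoC (1 + / INR dR)))
                     (Cmult lam (sinw lam (1 - x))))
              (Cmult (Cminus (Cminus (mu_minus dB dR lam) (Cmult (cc lam) (cc lam)))
                             (Cmult (Cmult (ss lam) (ccp lam)) (RtoC (/ INR dR))))
                     (Copp (cosw lam (1 - x))))).

(* Wronskian W = U V' - U' V, evaluated at x = 1/2 (it is independent of x). *)
Definition Wr (dB dR : nat) (lam : C) : C :=
  let x := / 2 in
  Cminus (Cmult (Ufun dB dR lam x) (Vder dB dR lam x))
         (Cmult (Uder dB dR lam x) (Vfun dB dR lam x)).

Definition sigma2 (dB dR : nat) (lam : C) : Prop :=
  ~ sigma1 dB dR lam /\ Wr dB dR lam = RtoC 0.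

(** Vertices are finite words [w : list nat] describing the path from a fixed
   red root r0 = [] : entry k of the word is the choice of child of the vertex
   at depth k.  The vertex at depth k is red iff k is even.  The root has
   dR+1 children, every other red vertex dR children (plus its parent), every
   blue vertex dB children (plus its parent).  Every edge joins a vertex
   [w <> []] to its parent [removelast w]; we index that edge by [w]. *)

Definition nchild (dB dR : nat) (depth : nat) : nat :=
  if Nat.eqb depth 0 then S dR else if Nat.even depth then dR else dB.

Fixpoint valid_from (dB dR : nat) (k : nat) (w : list nat) : Prop :=
  match w with
  | [] => True
  | a :: w' => (a < nchild dB dR k)%nat /\ valid_from dB dR (S k) w'
  end.

Definition vertex (dB dR : nat) (v : list nat) : Prop := valid_from dB dR 0 v.
Definition edge (dB dR : nat) (e : list nat) : Prop := vertex dB dR e /\ e <> [].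

(* Each edge is identified with [0,1], its red endpoint corresponding to 0 and
   its blue endpoint to 1.  Hence every edge incident to a red vertex v meets v
   at x = 0, every edge incident to a blue vertex meets v at x = 1. *)
Definition endpt (v : list nat) : R := if Nat.even (length v) then 0 else 1.

Definition incident (dB dR : nat) (v : list nat) : list (list nat) :=
  (match v with [] => [] | _ => [v] end) ++
  map (fun i => v ++ [i]) (seq 0 (nchild dB dR (length v))).

(* outward normal derivative at v of the edge function with derivative g *)
Definition outder (v : list nat) (g : R -> C) : C :=
  if Nat.even (length v) then g 0 else Copp (g 1).

Fixpoint Csum (l : list C) : C :=
  match l with [] => RtoC 0 | z :: l' => Cplus z (Csum l') end.

(* lam is an eigenvalue of the Kirchhoff Laplacian L = -d^2/dx^2 on the tree:
   there is a nonzero f in L^2(T) in the domain of L with L f = lam f.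
   f e is the function on edge e (coordinate x in [0,1]), g e its derivative.
   On each edge: f_e is C^1 on [0,1] (derivative g_e continuous up to the
   endpoints) and -f_e'' = lam f_e; f is continuous at every vertex and
   satisfies the Kirchhoff condition; sum_e int_0^1 |f_e|^2 < oo. *)
Definition tree_eigenvalue (dB dR : nat) (lam : C) : Prop :=
  exists (f g : list nat -> R -> C),
    (forall e, edge dB dR e ->
       (forall x, 0 < x < 1 ->
          is_derive (f e) x (g e x) /\
          is_derive (g e) x (Copp (Cmult lam (f e x)))) /\
       filterlim (f e) (at_right 0) (locally (f e 0)) /\
       filterlim (g e) (at_right 0) (locally (g e 0)) /\
       filterlim (f e) (at_left 1) (locally (f e 1)) /\
       filterlim (g e) (at_left 1) (locally (g e 1))) /\
    (forall v, vertex dB dR v ->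
       (forall e1 e2, In e1 (incident dB dR v) -> In e2 (incident dB dR v) ->
          f e1 (endpt v) = f e2 (endpt v)) /\
       Csum (map (fun e => outder v (g e)) (incident dB dR v)) = RtoC 0) /\
    (exists M : R, forall l : list (list nat), NoDup l ->
       (forall e, In e l -> edge dB dR e) ->
       fold_right Rplus 0 (map (fun e => RInt (fun x => (Cmod (f e x)) ^ 2) 0 1) l)
         <= M) /\
    (exists e x, edge dB dR e /\ 0 <= x <= 1 /\ f e x <> RtoC 0).

(* Main.v *)
Require Import Defs.
From Stdlib Require Import Reals List Lia Lra Factorial ClassicalEpsilon.
From Coquelicot Require Import Coquelicot.
Import ListNotations.
Open Scope R_scope.

Lemma fact_pos' n : 0 < INR (fact n).
Proof. apply lt_0_INR, lt_O_fact. Qed.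

Lemma fact_bound n k : / INR (fact (2*n+k)) <= / INR (fact n).
Proof.
  apply Rinv_le_contravar. apply fact_pos'. apply le_INR, fact_le. lia.
Qed.

Lemma pow_fact_exp x n : 0 <= x -> x^n / INR (fact n) <= exp x.
Proof.
  intros Hx. eapply Rle_trans; [|apply (exp_ge_taylor x n Hx)].
  destruct n as [|m]. simpl. lra.
  change (sum_f_R0 (fun k => x ^ k / INR (fact k)) (S m)) with
    (sum_f_R0 (fun k => x ^ k / INR (fact k)) m + x ^ (S m) / INR (fact (S m))).
  assert (0 <= sum_f_R0 (fun k => x ^ k / INR (fact k)) m).
  { apply cond_pos_sum. intros k. apply Rmult_le_pos. apply pow_le; auto.
    left; apply Rinv_0_lt_compat, fact_pos'. }
  lra.
Qed.

Lemma radius_inf (a : nat -> R) M K : 0 <= K ->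
  (forall n, Rabs (a n) <= M * K^n / INR (fact n)) ->
  forall x, Rbar_lt (Rabs x) (CV_radius a).
Proof.
  intros HK Ha x.
  assert (HM : 0 <= M).
  { specialize (Ha 0%nat). simpl in Ha. pose proof (Rabs_pos (a 0%nat)). lra. }
  set (r := Rabs x + 1).
  assert (Hr : 0 <= r) by (unfold r; pose proof (Rabs_pos x); lra).
  assert (Hle : Rbar_le r (CV_radius a)).
  { destruct (CV_radius_bounded a) as [Hub _]. apply Hub.
    exists (M * exp (K * r)). intros n.
    rewrite Rabs_mult, (Rabs_pos_eq (r^n)) by (apply pow_le; auto).
    eapply Rle_trans. apply Rmult_le_compat_r. apply pow_le; auto. apply Ha.
    replace (M * K ^ n / INR (fact n) * r ^ n) with (M * ((K*r)^n / INR (fact n)))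
      by (rewrite Rpow_mult_distr; field; apply Rgt_not_eq, fact_pos').
    apply Rmult_le_compat_l; auto. apply pow_fact_exp. apply Rmult_le_pos; auto. }
  eapply Rbar_lt_le_trans; [|exact Hle]. simpl. unfold r. lra.
Qed.

Ltac Req := match goal with |- ?a = ?b => change (@eq R a b) end.
Definition SX (z : nat -> R) (x : R) :=
  Series (fun n => z n * (x^(2*n+1) / INR (fact (2*n+1)))).
Definition CX (z : nat -> R) (x : R) :=
  Series (fun n => z n * (x^(2*n) / INR (fact (2*n)))).
Definition pS (z : nat -> R) n := z n / INR (fact (2*n+1)).
Definition pC (z : nat -> R) n := z n / INR (fact (2*n)).

Lemma SX_ps (z : nat -> R) x : SX z x = x * PSeries (pS z) (x^2).
Proof.
  unfold SX, PSeries. rewrite <- Series_scal_l. apply Series_ext. intros n.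
  unfold pS. rewrite pow_add, pow_mult. simpl. field. apply Rgt_not_eq, fact_pos'.
Qed.

Lemma CX_ps (z : nat -> R) x : CX z x = PSeries (pC z) (x^2).
Proof.
  unfold CX, PSeries. apply Series_ext. intros n.
  unfold pC. rewrite pow_mult. field. apply Rgt_not_eq, fact_pos'.
Qed.


Section RS.
Variable z : nat -> R.
Variables M K : R.
Hypothesis HK : 0 <= K.
Hypothesis Hz : forall n, Rabs (z n) <= M * K^n.

Lemma bnd_gen k n : Rabs (z n / INR (fact (2*n+k))) <= M * K^n / INR (fact n).
Proof.
  unfold Rdiv. rewrite Rabs_mult, (Rabs_pos_eq (/ _)).
  2:{ left; apply Rinv_0_lt_compat, fact_pos'. }
  apply Rmult_le_compat; auto. apply Rabs_pos. left; apply Rinv_0_lt_compat, fact_pos'.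
  apply fact_bound.
Qed.

Lemma rad_pS x : Rbar_lt (Rabs x) (CV_radius (pS z)).
Proof. apply (radius_inf _ M K HK). intros n. apply (bnd_gen 1). Qed.

Lemma rad_pC x : Rbar_lt (Rabs x) (CV_radius (pC z)).
Proof. apply (radius_inf _ M K HK). intros n. unfold pC.
  replace (2*n)%nat with (2*n+0)%nat by lia. apply (bnd_gen 0). Qed.

Lemma scalR (a b : R) : scal a b = a * b.
Proof. reflexivity. Qed.

Lemma pow_odd x n : x^(2*n+1) = x * (x^2)^n.
Proof. rewrite pow_add, pow_mult, pow_1. ring. Qed.
Lemma pow_even x n : x^(2*n) = (x^2)^n.
Proof. rewrite pow_mult. ring. Qed.

Lemma ex_SX x : ex_series (fun n => z n * (x^(2*n+1) / INR (fact (2*n+1)))).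
Proof.
  destruct (CV_radius_inside _ _ (rad_pS (x^2))) as [l Hl].
  exists (x * l). pose proof (is_series_scal_l x _ _ Hl) as H.
  eapply is_series_ext; [|exact H]. intros n.
  rewrite pow_n_pow, pow_odd. unfold pS, scal. simpl. unfold mult. simpl. rewrite ?pow_n_pow. field. apply Rgt_not_eq, fact_pos'.
Qed.

Lemma ex_CX x : ex_series (fun n => z n * (x^(2*n) / INR (fact (2*n)))).
Proof.
  destruct (CV_radius_inside _ _ (rad_pC (x^2))) as [l Hl].
  exists l. eapply is_series_ext; [|exact Hl]. intros n.
  rewrite pow_n_pow, pow_even. unfold pC, scal. simpl. unfold mult. simpl. rewrite ?pow_n_pow. field. apply Rgt_not_eq, fact_pos'.
Qed.

Lemma sq_der x : is_derive (fun t : R => t^2) x (2*x).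
Proof. auto_derive; auto. ring. Qed.


Lemma is_derive_val (f : R -> R) x l l' : is_derive f x l -> l = l' -> is_derive f x l'.
Proof. intros H <-; exact H. Qed.

Lemma INR_odd n : INR (2*n+1) = 2 * INR n + 1.
Proof. rewrite plus_INR, mult_INR. simpl. ring. Qed.
Lemma INR_even n : INR (2*n) = 2 * INR n.
Proof. rewrite mult_INR. simpl. ring. Qed.
Lemma fact_odd n : INR (fact (2*n+1)) = (2 * INR n + 1) * INR (fact (2*n)).
Proof. replace (2*n+1)%nat with (S (2*n)) by lia. rewrite fact_simpl, mult_INR, S_INR, INR_even. ring. Qed.
Lemma fact_evenS n : INR (fact (2*S n)) = (2 * INR n + 2) * INR (fact (2*n+1)).
Proof. replace (2*S n)%nat with (S (2*n+1)) by lia. rewrite fact_simpl, mult_INR, S_INR, INR_odd. ring. Qed.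

Lemma PQ_id t : PSeries (pS z) t + 2 * t * PSeries (PS_derive (pS z)) t = PSeries (pC z) t.
Proof.
  replace (2 * t * PSeries (PS_derive (pS z)) t)
    with (PSeries (PS_scal 2 (PS_incr_1 (PS_derive (pS z)))) t)
    by (rewrite PSeries_scal, PSeries_incr_1; ring).
  rewrite <- PSeries_plus.
  2: apply CV_radius_inside, rad_pS.
  2: { apply CV_radius_inside. rewrite CV_radius_scal by lra.
       rewrite CV_radius_incr_1, CV_radius_derive. apply rad_pS. }
  apply PSeries_ext. intros [|m].
  - unfold PS_plus, PS_scal, PS_incr_1, pS, pC, plus, scal, zero. simpl.
    unfold mult; simpl. field.
  - unfold PS_plus, PS_scal, PS_incr_1, PS_derive, pS, pC.
    rewrite fact_odd, fact_evenS. rewrite S_INR.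
    pose proof (fact_pos' (2*m+1)). pose proof (pos_INR m).
    set (N := INR (fact (2*m+1))). set (m' := INR m).
    assert (0 < N) by apply fact_pos'. assert (0 <= m') by apply pos_INR.
    change (plus ?a ?b) with (a + b). change (scal ?a ?b) with (a * b).
    field. repeat split; lra.
Qed.

Lemma D_SX x : is_derive (SX z) x (CX z x).
Proof.
  apply (is_derive_ext (fun t => t * PSeries (pS z) (t^2))).
  { intros t. symmetry. apply SX_ps. }
  assert (H1 : is_derive (fun t => PSeries (pS z) (t^2)) x
                 (scal (2*x) (PSeries (PS_derive (pS z)) (x^2)))).
  { apply (is_derive_comp (PSeries (pS z)) (fun t => t^2)).
    apply is_derive_PSeries, rad_pS. apply sq_der. }
  pose proof (is_derive_mult (fun t => t) (fun t => PSeries (pS z) (t^2)) x _ _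
               (is_derive_id x) H1 (fun a b => Rmult_comm a b)) as H.
  eapply is_derive_val. exact H.
  rewrite CX_ps, <- PQ_id. change (plus ?a ?b) with (a + b).
  change (mult ?a ?b) with (a * b). change (scal ?a ?b) with (a * b).
  match goal with |- ?a = ?b => change (@eq R a b) end. unfold one; simpl. ring.
Qed.

Lemma zS_bound n : Rabs (z (S n)) <= (M * K) * K^n.
Proof. rewrite Rmult_assoc. apply Hz. Qed.

Lemma D_CX x : is_derive (CX z) x (SX (fun n => z (S n)) x).
Proof.
  apply (is_derive_ext (fun t => PSeries (pC z) (t^2))).
  { intros t. symmetry. apply CX_ps. }
  eapply is_derive_val.
  apply (is_derive_comp (PSeries (pC z)) (fun t => t^2)).
  apply is_derive_PSeries, rad_pC. apply sq_der.
  rewrite (SX_ps (fun n => z (S n))). change (scal ?a ?b) with (a * b).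
  replace (PSeries (pS (fun n : nat => z (S n))) (x ^ 2))
    with (PSeries (PS_scal 2 (PS_derive (pC z))) (x^2)).
  rewrite PSeries_scal. Req. ring.
  apply PSeries_ext. intros n. unfold PS_scal, PS_derive, pS, pC.
  rewrite fact_evenS, S_INR. pose proof (fact_pos' (2*n+1)). pose proof (pos_INR n).
  change (scal ?a ?b) with (a * b). Req. field. repeat split; lra.
Qed.

End RS.

Definition zr (lam : C) n := fst (Cpow (Copp lam) n).
Definition zi (lam : C) n := snd (Cpow (Copp lam) n).

Lemma zr_bound lam n : Rabs (zr lam n) <= 1 * (Cmod lam)^n.
Proof.
  unfold zr. rewrite Rmult_1_l, <- Cmod_opp, <- Cmod_pow.
  pose proof (Rmax_Cmod (Cpow (Copp lam) n)).
  pose proof (Rmax_l (Rabs (fst (Cpow (Copp lam) n))) (Rabs (snd (Cpow (Copp lam) n)))). lra.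
Qed.
Lemma zi_bound lam n : Rabs (zi lam n) <= 1 * (Cmod lam)^n.
Proof.
  unfold zi. rewrite Rmult_1_l, <- Cmod_opp, <- Cmod_pow.
  pose proof (Rmax_Cmod (Cpow (Copp lam) n)).
  pose proof (Rmax_r (Rabs (fst (Cpow (Copp lam) n))) (Rabs (snd (Cpow (Copp lam) n)))). lra.
Qed.

Lemma fst_mult_R (a : C) r : fst (Cmult a (RtoC r)) = fst a * r.
Proof. destruct a; simpl; ring. Qed.
Lemma snd_mult_R (a : C) r : snd (Cmult a (RtoC r)) = snd a * r.
Proof. destruct a; simpl; ring. Qed.

Lemma sinw_fst lam x : fst (sinw lam x) = SX (zr lam) x.
Proof. unfold sinw, Cseries, SX. cbn [fst]. apply Series_ext. intros n. rewrite fst_mult_R. reflexivity. Qed.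
Lemma sinw_snd lam x : snd (sinw lam x) = SX (zi lam) x.
Proof. unfold sinw, Cseries, SX. cbn [snd]. apply Series_ext. intros n. rewrite snd_mult_R. reflexivity. Qed.
Lemma cosw_fst lam x : fst (cosw lam x) = CX (zr lam) x.
Proof. unfold cosw, Cseries, CX. cbn [fst]. apply Series_ext. intros n. rewrite fst_mult_R. reflexivity. Qed.
Lemma cosw_snd lam x : snd (cosw lam x) = CX (zi lam) x.
Proof. unfold cosw, Cseries, CX. cbn [snd]. apply Series_ext. intros n. rewrite snd_mult_R. reflexivity. Qed.

Lemma zr_S lam n : zr lam (S n) = - fst lam * zr lam n + snd lam * zi lam n.
Proof. unfold zr, zi. simpl. destruct lam as [a b]. simpl. ring. Qed.
Lemma zi_S lam n : zi lam (S n) = - fst lam * zi lam n - snd lam * zr lam n.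
Proof. unfold zr, zi. simpl. destruct lam as [a b]. simpl. ring. Qed.

Lemma Cmod_ge0 lam : 0 <= Cmod lam.
Proof. apply Cmod_ge_0. Qed.

Lemma ex_series_scalR (c : R) (a : nat -> R) : ex_series a -> ex_series (fun n => c * a n).
Proof. intros H. exact (ex_series_scal_l c a H). Qed.

Lemma SX_lin (a b : nat -> R) (p q : R) M1 K1 M2 K2 : 0 <= K1 -> 0 <= K2 ->
  (forall n, Rabs (a n) <= M1 * K1^n) -> (forall n, Rabs (b n) <= M2 * K2^n) ->
  forall x, SX (fun n => p * a n + q * b n) x = p * SX a x + q * SX b x.
Proof.
  intros H1 H2 Ha Hb x. unfold SX.
  rewrite <- !Series_scal_l, <- Series_plus.
  apply Series_ext. intros n. ring.
  apply (ex_series_scalR p), (ex_SX a M1 K1 H1 Ha).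
  apply (ex_series_scalR q), (ex_SX b M2 K2 H2 Hb).
Qed.

Definition CD (f f' : R -> C) := forall x,
  is_derive (fun t => fst (f t)) x (fst (f' x)) /\
  is_derive (fun t => snd (f t)) x (snd (f' x)).

Lemma CD_sinw lam : CD (sinw lam) (cosw lam).
Proof.
  intros x. split.
  - apply (is_derive_ext (SX (zr lam))). intros t; rewrite sinw_fst; auto.
    rewrite cosw_fst. apply (D_SX _ 1 (Cmod lam) (Cmod_ge0 lam) (zr_bound lam)).
  - apply (is_derive_ext (SX (zi lam))). intros t; rewrite sinw_snd; auto.
    rewrite cosw_snd. apply (D_SX _ 1 (Cmod lam) (Cmod_ge0 lam) (zi_bound lam)).
Qed.

Lemma SX_ext (a b : nat -> R) x : (forall n, a n = b n) -> SX a x = SX b x.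
Proof. intros H. unfold SX. apply Series_ext. intros n. rewrite H. auto. Qed.

Lemma fst_opp_mult (a b : C) : fst (Copp (Cmult a b)) = - (fst a * fst b - snd a * snd b).
Proof. destruct a, b; simpl; ring. Qed.
Lemma snd_opp_mult (a b : C) : snd (Copp (Cmult a b)) = - (fst a * snd b + snd a * fst b).
Proof. destruct a, b; simpl; ring. Qed.

Lemma CD_cosw lam : CD (cosw lam) (fun x => Copp (Cmult lam (sinw lam x))).
Proof.
  pose proof (Cmod_ge0 lam) as H0.
  intros x. split.
  - apply (is_derive_ext (CX (zr lam))). intros t; rewrite cosw_fst; auto.
    eapply is_derive_val. apply (D_CX _ 1 (Cmod lam) H0 (zr_bound lam)).
    rewrite (SX_ext _ (fun n => (- fst lam) * zr lam n + snd lam * zi lam n)) by apply zr_S.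
    rewrite (SX_lin _ _ _ _ 1 (Cmod lam) 1 (Cmod lam) H0 H0 (zr_bound lam) (zi_bound lam)).
    rewrite fst_opp_mult, sinw_fst, sinw_snd. Req. ring.
  - apply (is_derive_ext (CX (zi lam))). intros t; rewrite cosw_snd; auto.
    eapply is_derive_val. apply (D_CX _ 1 (Cmod lam) H0 (zi_bound lam)).
    rewrite (SX_ext _ (fun n => (- fst lam) * zi lam n + (- snd lam) * zr lam n))
      by (intros n; rewrite zi_S; ring).
    rewrite (SX_lin _ _ _ _ 1 (Cmod lam) 1 (Cmod lam) H0 H0 (zi_bound lam) (zr_bound lam)).
    rewrite snd_opp_mult, sinw_fst, sinw_snd. Req. ring.
Qed.

Lemma Ceq (a b : C) : fst a = fst b -> snd a = snd b -> a = b.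
Proof. destruct a, b; simpl; intros; subst; auto. Qed.

Lemma dmul u v x u' v' : is_derive u x u' -> is_derive v x v' ->
  is_derive (fun t => u t * v t) x (u' * v x + u x * v').
Proof. intros H1 H2. eapply is_derive_val. apply (is_derive_mult u v x u' v' H1 H2 Rmult_comm). reflexivity. Qed.
Lemma dplus u v x u' v' : is_derive u x u' -> is_derive v x v' ->
  is_derive (fun t => u t + v t) x (u' + v').
Proof. intros H1 H2. apply (is_derive_plus u v x u' v' H1 H2). Qed.
Lemma dminus u v x u' v' : is_derive u x u' -> is_derive v x v' ->
  is_derive (fun t => u t - v t) x (u' - v').
Proof. intros H1 H2. apply (is_derive_minus u v x u' v' H1 H2). Qed.

Lemma dopp u x u' : is_derive u x u' -> is_derive (fun t => - u t) x (- u').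
Proof. intros H. exact (is_derive_opp u x u' H). Qed.

Lemma CD_ext f g f' g' : (forall x, f x = g x) -> (forall x, f' x = g' x) -> CD f f' -> CD g g'.
Proof.
  intros H1 H2 H x. destruct (H x) as [Ha Hb]. rewrite <- H2. split.
  apply (is_derive_ext (fun t => fst (f t))); auto. intros t; rewrite H1; auto.
  apply (is_derive_ext (fun t => snd (f t))); auto. intros t; rewrite H1; auto.
Qed.

Lemma CD_plus f g f' g' : CD f f' -> CD g g' ->
  CD (fun x => Cplus (f x) (g x)) (fun x => Cplus (f' x) (g' x)).
Proof.
  intros Hf Hg x. destruct (Hf x) as [Hf1 Hf2]. destruct (Hg x) as [Hg1 Hg2]. split.
  - apply (is_derive_ext (fun t => fst (f t) + fst (g t))). intros t; destruct (f t), (g t); reflexivity.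
    eapply is_derive_val. apply dplus; eauto. destruct (f' x), (g' x); reflexivity.
  - apply (is_derive_ext (fun t => snd (f t) + snd (g t))). intros t; destruct (f t), (g t); reflexivity.
    eapply is_derive_val. apply dplus; eauto. destruct (f' x), (g' x); reflexivity.
Qed.

Lemma CD_mult f g f' g' : CD f f' -> CD g g' ->
  CD (fun x => Cmult (f x) (g x)) (fun x => Cplus (Cmult (f' x) (g x)) (Cmult (f x) (g' x))).
Proof.
  intros Hf Hg x. destruct (Hf x) as [Hf1 Hf2]. destruct (Hg x) as [Hg1 Hg2]. split.
  - apply (is_derive_ext (fun t => fst (f t) * fst (g t) - snd (f t) * snd (g t))).
    intros t; destruct (f t), (g t); reflexivity.
    eapply is_derive_val. apply dminus; apply dmul; eauto.
    destruct (f' x), (g' x), (f x), (g x); simpl; ring.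
  - apply (is_derive_ext (fun t => fst (f t) * snd (g t) + snd (f t) * fst (g t))).
    intros t; destruct (f t), (g t); reflexivity.
    eapply is_derive_val. apply dplus; apply dmul; eauto.
    destruct (f' x), (g' x), (f x), (g x); simpl; ring.
Qed.

Lemma CD_const (a : C) : CD (fun _ => a) (fun _ => RtoC 0).
Proof. intros x. split; simpl. exact (is_derive_const (fst a) x). exact (is_derive_const (snd a) x). Qed.

Lemma CD_opp f f' : CD f f' -> CD (fun x => Copp (f x)) (fun x => Copp (f' x)).
Proof.
  intros Hf x. destruct (Hf x) as [Hf1 Hf2]. split.
  - apply (is_derive_ext (fun t => - fst (f t))). intros t; destruct (f t); reflexivity.
    eapply is_derive_val. apply dopp; eauto. destruct (f' x); reflexivity.
  - apply (is_derive_ext (fun t => - snd (f t))). intros t; destruct (f t); reflexivity.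
    eapply is_derive_val. apply dopp; eauto. destruct (f' x); reflexivity.
Qed.

Lemma CD_refl f f' : CD f f' -> CD (fun x => f (1 - x)) (fun x => Copp (f' (1 - x))).
Proof.
  intros Hf x. destruct (Hf (1 - x)) as [Hf1 Hf2].
  assert (Hd : is_derive (fun t : R => 1 - t) x (-1)) by (auto_derive; auto; ring).
  split.
  - eapply is_derive_val. apply (is_derive_comp (fun t => fst (f t)) (fun t => 1 - t)); eauto.
    destruct (f' (1-x)); simpl. change (scal ?a ?b) with (a * b). Req. ring.
  - eapply is_derive_val. apply (is_derive_comp (fun t => snd (f t)) (fun t => 1 - t)); eauto.
    destruct (f' (1-x)); simpl. change (scal ?a ?b) with (a * b). Req. ring.
Qed.

Lemma const_der (h : R -> R) : (forall x, is_derive h x 0) -> forall a b, h a = h b.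
Proof.
  intros H a b.
  destruct (MVT_gen h a b (fun _ => 0)) as [c [_ Hc]].
  - intros; apply H.
  - intros x _. apply continuity_pt_filterlim. exact (ex_derive_continuous (K:=R_AbsRing) (V:=R_NormedModule) h x (ex_intro _ 0 (H x))).
  - lra.
Qed.

Lemma CD_zero f : CD f (fun _ => RtoC 0) -> forall a b, f a = f b.
Proof.
  intros H a b. apply Ceq.
  apply (const_der (fun t => fst (f t))). intros x; apply (H x).
  apply (const_der (fun t => snd (f t))). intros x; apply (H x).
Qed.

Lemma Series_zero : Series (fun _ => 0) = 0.
Proof.
  rewrite (Series_ext _ (fun n => 0 * 0)) by (intros; ring).
  rewrite Series_scal_l. ring.
Qed.

Lemma CX_0 z M K : 0 <= K -> (forall n, Rabs (z n) <= M * K^n) -> CX z 0 = z 0%nat.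
Proof.
  intros HK Hz. unfold CX. rewrite Series_incr_1 by apply (ex_CX z M K HK Hz).
  rewrite (Series_ext _ (fun _ => 0)). rewrite Series_zero. simpl. field.
  intros n. rewrite pow_i by lia. unfold Rdiv. ring.
Qed.

Lemma SX_0 z : SX z 0 = 0.
Proof.
  unfold SX. rewrite (Series_ext _ (fun _ => 0)). apply Series_zero.
  intros n. rewrite pow_i by lia. unfold Rdiv. ring.
Qed.

Lemma cosw_0 lam : cosw lam 0 = RtoC 1.
Proof.
  apply Ceq.
  - rewrite cosw_fst, (CX_0 _ 1 (Cmod lam) (Cmod_ge0 lam) (zr_bound lam)). reflexivity.
  - rewrite cosw_snd, (CX_0 _ 1 (Cmod lam) (Cmod_ge0 lam) (zi_bound lam)). reflexivity.
Qed.

Lemma sinw_0 lam : sinw lam 0 = RtoC 0.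
Proof. apply Ceq. rewrite sinw_fst, SX_0; reflexivity. rewrite sinw_snd, SX_0; reflexivity. Qed.

Lemma pyth_x lam x :
  Cplus (Cmult (cosw lam x) (cosw lam x)) (Cmult lam (Cmult (sinw lam x) (sinw lam x))) = RtoC 1.
Proof.
  set (P := fun x => Cplus (Cmult (cosw lam x) (cosw lam x)) (Cmult lam (Cmult (sinw lam x) (sinw lam x)))).
  change (P x = RtoC 1).
  assert (HP : CD P (fun _ => RtoC 0)).
  { eapply CD_ext; [ | | apply CD_plus; [apply CD_mult; apply CD_cosw | apply CD_mult; [apply CD_const| apply CD_mult; apply CD_sinw]]].
    intros t; reflexivity.
    intros t. simpl. ring. }
  rewrite (CD_zero P HP x 0). unfold P. rewrite cosw_0, sinw_0. ring.
Qed.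

Lemma CD_mconst (a : C) f f' : CD f f' -> CD (fun x => Cmult a (f x)) (fun x => Cmult a (f' x)).
Proof.
  intros H. eapply CD_ext; [| | apply CD_mult; [apply CD_const | exact H]].
  intros; reflexivity. intros t; simpl; ring.
Qed.

Lemma CD_wronsk (lam : C) u u' v v' :
  CD u u' -> CD u' (fun x => Copp (Cmult lam (u x))) ->
  CD v v' -> CD v' (fun x => Copp (Cmult lam (v x))) ->
  forall a b, Cminus (Cmult (u a) (v' a)) (Cmult (u' a) (v a)) =
              Cminus (Cmult (u b) (v' b)) (Cmult (u' b) (v b)).
Proof.
  intros H1 H2 H3 H4.
  apply (CD_zero (fun a => Cminus (Cmult (u a) (v' a)) (Cmult (u' a) (v a)))).
  eapply CD_ext; [| | apply CD_plus; [apply (CD_mult _ _ _ _ H1 H4) | apply CD_opp; apply (CD_mult _ _ _ _ H2 H3)]].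
  intros t; reflexivity. intros t; simpl; ring.
Qed.

Section Wr.
Variables dB dR : nat.
Variable lam : C.

Let A := Cmult (Cmult (ss lam) (cc lam)) (RtoC (1 + / INR dB)).
Let B := Cminus (Cminus (mu_minus dB dR lam) (Cmult (cc lam) (cc lam)))
                       (Cmult (Cmult (ss lam) (ccp lam)) (RtoC (/ INR dB))).
Let A' := Cmult (Cmult (ss lam) (cc lam)) (RtoC (1 + / INR dR)).
Let B' := Cminus (Cminus (mu_minus dB dR lam) (Cmult (cc lam) (cc lam)))
                       (Cmult (Cmult (ss lam) (ccp lam)) (RtoC (/ INR dR))).

Lemma CD_V : CD (Vfun dB dR lam) (Vder dB dR lam).
Proof.
  eapply CD_ext; [| | apply CD_plus; [apply CD_mconst; apply CD_cosw | apply CD_mconst; apply CD_sinw]].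
  intros t; reflexivity. intros t; reflexivity.
Qed.

Lemma CD_V' : CD (Vder dB dR lam) (fun x => Copp (Cmult lam (Vfun dB dR lam x))).
Proof.
  eapply CD_ext; [| | apply CD_plus; [apply CD_mconst; apply CD_opp; apply CD_mconst; apply CD_sinw
                                     | apply CD_mconst; apply CD_cosw]].
  intros t; reflexivity. intros t; unfold Vfun; ring.
Qed.

Lemma CD_U : CD (Ufun dB dR lam) (Uder dB dR lam).
Proof.
  eapply CD_ext; [| | apply CD_opp; apply CD_plus;
     [apply CD_mconst; apply (CD_refl (cosw lam)); apply CD_cosw
     | apply CD_mconst; apply (CD_refl (sinw lam)); apply CD_sinw]].
  intros t; reflexivity. intros t; unfold Uder; ring.
Qed.

Lemma CD_U' : CD (Uder dB dR lam) (fun x => Copp (Cmult lam (Ufun dB dR lam x))).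
Proof.
  eapply CD_ext; [| | apply CD_opp; apply CD_plus;
     [apply CD_mconst; apply CD_mconst; apply (CD_refl (sinw lam)); apply CD_sinw
     | apply CD_mconst; apply CD_opp; apply (CD_refl (cosw lam)); apply CD_cosw]].
  intros t; reflexivity. intros t; unfold Ufun; ring.
Qed.

Lemma Wr_0 : Wr dB dR lam =
  Cminus (Cmult (Ufun dB dR lam 0) (Vder dB dR lam 0)) (Cmult (Uder dB dR lam 0) (Vfun dB dR lam 0)).
Proof.
  unfold Wr. apply (CD_wronsk lam); [apply CD_U | apply CD_U' | apply CD_V | apply CD_V'].
Qed.

Lemma Wr_val : Wr dB dR lam =
  Cminus (Cmult (Copp (Cplus (Cmult A' (cc lam)) (Cmult B' (ss lam)))) B)
         (Cmult (Copp (Cplus (Cmult A' (Cmult lam (ss lam))) (Cmult B' (Copp (cc lam))))) A).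
Proof.
  rewrite Wr_0. unfold Ufun, Uder, Vfun, Vder. rewrite Rminus_0_r, cosw_0, sinw_0.
  fold (cc lam) (ss lam). fold A B A' B'. ring.
Qed.

End Wr.

Lemma RtoC_plus' a b : RtoC (a + b) = Cplus (RtoC a) (RtoC b).
Proof. apply Ceq; simpl; ring. Qed.

Definition Wtarget dB dR lam m :=
  Cmult (Cmult (Cmult (ss lam) (Cmult (cc lam) (cc lam)))
     (Cmult (Cplus (RtoC 1) (RtoC (/ INR dB))) (Cplus (RtoC 1) (RtoC (/ INR dR)))))
     (Cminus (RtoC 1) m).

Lemma Wr_formula dB dR lam :
  is_eig2 (T0 dB dR lam) (mu_minus dB dR lam) ->
  Wr dB dR lam = Wtarget dB dR lam (mu_minus dB dR lam).
Proof.
  intros H. pose proof (pyth_x lam 1) as P. fold (cc lam) (ss lam) in P.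
  cbv beta iota zeta delta [is_eig2 T0 m2mul M0 Jd] in H.
  rewrite Wr_val. unfold Wtarget. unfold ccp, ssp in *. rewrite !RtoC_plus'.
  set (c := cc lam) in *. set (s := ss lam) in *. set (m := mu_minus dB dR lam) in *.
  set (x := RtoC (/ INR dB)) in *. set (y := RtoC (/ INR dR)) in *.
  match type of H with ?E = _ =>
    transitivity (Cplus (Cminus (Cmult (Cmult (Cmult s (Cmult c c))
       (Cmult (Cplus (RtoC 1) x) (Cplus (RtoC 1) y))) (Cminus (RtoC 1) m)) (Cmult s E))
       (Cmult (Cmult (Cmult s (Cmult c c)) (Cmult (Cplus (RtoC 1) x) (Cplus (RtoC 1) y)))
              (Cminus (Cplus (Cmult c c) (Cmult lam (Cmult s s))) (RtoC 1))))
  end.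
  - ring.
  - rewrite H, P. ring.
Qed.

Lemma Csqrt_ex (w : C) : exists r, Cmult r r = w.
Proof.
  destruct w as [a b].
  set (r := Cmod (a, b)).
  assert (Hr2 : r * r = a * a + b * b).
  { unfold r. pose proof (Cmod2_alt (a, b)) as H. simpl in H. unfold Re, Im in H. simpl in H. nra. }
  assert (Hra : Rabs a <= r).
  { pose proof (Rmax_Cmod (a, b)) as H. simpl in H. pose proof (Rmax_l (Rabs a) (Rabs b)). unfold r. lra. }
  assert (Hr0 : 0 <= r) by (pose proof (Rabs_pos a); lra).
  assert (H1 : 0 <= (r + a) / 2) by (pose proof (Rle_abs (-a)); rewrite Rabs_Ropp in *; lra).
  assert (H2 : 0 <= (r - a) / 2) by (pose proof (Rle_abs a); lra).
  set (u := sqrt ((r + a) / 2)). set (v := sqrt ((r - a) / 2)).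
  assert (Hu : u * u = (r + a) / 2) by (apply sqrt_sqrt; auto).
  assert (Hv : v * v = (r - a) / 2) by (apply sqrt_sqrt; auto).
  assert (Hu0 : 0 <= u) by apply sqrt_pos. assert (Hv0 : 0 <= v) by apply sqrt_pos.
  assert (Huv : (u * v) * (u * v) = (b / 2) * (b / 2)).
  { replace ((u*v)*(u*v)) with ((u*u)*(v*v)) by ring. rewrite Hu, Hv. nra. }
  assert (Huv2 : u * v = Rabs b / 2).
  { assert (0 <= u * v) by nra. assert (0 <= Rabs b / 2) by (pose proof (Rabs_pos b); lra).
    assert ((Rabs b / 2) * (Rabs b / 2) = (b/2) * (b/2)).
    { unfold Rdiv. replace (Rabs b * / 2 * (Rabs b * / 2)) with ((Rabs b * Rabs b) * /4) by field.
      rewrite <- Rabs_mult. rewrite Rabs_pos_eq by nra. field. }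
    nra. }
  destruct (Rle_dec 0 b) as [Hb | Hb].
  - exists (u, v). apply Ceq; simpl.
    + lra.
    + rewrite Rabs_pos_eq in Huv2 by lra. lra.
  - exists (u, - v). apply Ceq; simpl.
    + lra.
    + rewrite Rabs_left in Huv2 by lra. lra.
Qed.

Lemma quad_roots (t q : C) : exists m1 m2 : C,
  Cplus m1 m2 = t /\ Cmult m1 m2 = q.
Proof.
  destruct (Csqrt_ex (Cminus (Cmult t t) (Cmult (Cmult (RtoC 2) (RtoC 2)) q))) as [r Hr].
  exists (Cdiv (Cplus t r) (RtoC 2)), (Cdiv (Cminus t r) (RtoC 2)).
  assert (H2 : RtoC 2 <> RtoC 0).
  { intros H. injection H. lra. }
  split.
  - field; auto.
  - transitivity (Cdiv (Cminus (Cmult t t) (Cmult r r)) (Cmult (RtoC 2) (RtoC 2))).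
    + field; auto.
    + rewrite Hr. field; auto.
Qed.

Lemma T0_det dB dR lam A B C D : T0 dB dR lam = ((A,B),(C,D)) ->
  Cminus (Cmult A D) (Cmult B C) = Cmult (RtoC (/ INR dB)) (RtoC (/ INR dR)).
Proof.
  intros H. pose proof (pyth_x lam 1) as P. fold (cc lam) (ss lam) in P.
  cbv beta iota zeta delta [T0 m2mul M0 Jd] in H. unfold ccp, ssp in H.
  injection H as HA HB HC HD. subst A B C D.
  set (c := cc lam) in *. set (s := ss lam) in *.
  set (x := RtoC (/ INR dB)). set (y := RtoC (/ INR dR)).
  transitivity (Cmult (Cmult x y) (Cmult (Cplus (Cmult c c) (Cmult lam (Cmult s s)))
                                         (Cplus (Cmult c c) (Cmult lam (Cmult s s))))).
  - ring.
  - rewrite P. ring.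
Qed.

Lemma eig_exists dB dR lam : exists m1 m2, is_eig2 (T0 dB dR lam) m1 /\
  is_eig2 (T0 dB dR lam) m2 /\ Cmult m1 m2 = Cmult (RtoC (/ INR dB)) (RtoC (/ INR dR)).
Proof.
  destruct (T0 dB dR lam) as [[A B] [C D]] eqn:HT.
  pose proof (T0_det _ _ _ _ _ _ _ HT) as Hd.
  destruct (quad_roots (Cplus A D) (Cminus (Cmult A D) (Cmult B C))) as (m1 & m2 & Hs & Hp).
  exists m1, m2. unfold is_eig2. split; [| split].
  - transitivity (Cplus (Cminus (Cmult m1 m1) (Cmult (Cplus A D) m1)) (Cminus (Cmult A D) (Cmult B C))).
    ring. rewrite <- Hs, <- Hp. ring.
  - transitivity (Cplus (Cminus (Cmult m2 m2) (Cmult (Cplus A D) m2)) (Cminus (Cmult A D) (Cmult B C))).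
    ring. rewrite <- Hs, <- Hp. ring.
  - rewrite Hp; exact Hd.
Qed.

Lemma bound_pos dB dR : (1 <= dB)%nat -> (1 <= dR)%nat -> 0 < Defs.bound dB dR.
Proof.
  intros H1 H2. unfold Defs.bound. apply Rinv_0_lt_compat, sqrt_lt_R0.
  apply Rmult_lt_0_compat; apply lt_0_INR; lia.
Qed.

Lemma bound_sq dB dR : (1 <= dB)%nat -> (1 <= dR)%nat ->
  Defs.bound dB dR * Defs.bound dB dR = / INR dB * / INR dR.
Proof.
  intros H1 H2. unfold Defs.bound.
  assert (0 < INR dB) by (apply lt_0_INR; lia). assert (0 < INR dR) by (apply lt_0_INR; lia).
  rewrite <- Rinv_mult. rewrite sqrt_sqrt by nra. rewrite Rinv_mult. auto.
Qed.

Lemma Cmod_xy dB dR : (1 <= dB)%nat -> (1 <= dR)%nat ->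
  Cmod (Cmult (RtoC (/ INR dB)) (RtoC (/ INR dR))) = / INR dB * / INR dR.
Proof.
  intros H1 H2. rewrite Cmod_mult, !Cmod_R.
  assert (0 < INR dB) by (apply lt_0_INR; lia). assert (0 < INR dR) by (apply lt_0_INR; lia).
  rewrite !Rabs_pos_eq; auto; left; apply Rinv_0_lt_compat; auto.
Qed.

Lemma mu_spec dB dR lam : (1 <= dB)%nat -> (1 <= dR)%nat -> ~ sigma1 dB dR lam ->
  is_eig2 (T0 dB dR lam) (mu_minus dB dR lam) /\ Cmod (mu_minus dB dR lam) < Defs.bound dB dR.
Proof.
  intros H1 H2 Hn. unfold mu_minus. apply epsilon_spec.
  destruct (eig_exists dB dR lam) as (m1 & m2 & E1 & E2 & Hp).
  pose proof (bound_pos _ _ H1 H2) as Hb. pose proof (bound_sq _ _ H1 H2) as Hb2.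
  assert (Hm : Cmod m1 * Cmod m2 = Defs.bound dB dR * Defs.bound dB dR).
  { rewrite <- Cmod_mult, Hp, Cmod_xy; auto. }
  assert (N1 : Cmod m1 <> Defs.bound dB dR) by (intros E; apply Hn; exists m1; auto).
  assert (N2 : Cmod m2 <> Defs.bound dB dR) by (intros E; apply Hn; exists m2; auto).
  pose proof (Cmod_ge_0 m1). pose proof (Cmod_ge_0 m2).
  destruct (Rlt_or_le (Cmod m1) (Defs.bound dB dR)).
  - exists m1; auto.
  - exists m2. split; auto.
    assert (Cmod m1 > Defs.bound dB dR) by lra.
    nra.
Qed.

Lemma Cmult_eq0 (a b : C) : Cmult a b = RtoC 0 -> a = RtoC 0 \/ b = RtoC 0.
Proof.
  intros H. assert (Cmod a * Cmod b = 0) by (rewrite <- Cmod_mult, H; apply Cmod_0).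
  destruct (Rmult_integral _ _ H0); [left|right]; apply Cmod_eq_0; auto.
Qed.

Lemma sig2_sc dB dR lam : (1 <= dB)%nat -> (1 <= dR)%nat -> sigma2 dB dR lam ->
  ss lam = RtoC 0 \/ cc lam = RtoC 0.
Proof.
  intros H1 H2 [Hn HW].
  destruct (mu_spec _ _ _ H1 H2 Hn) as [He Hm].
  rewrite Wr_formula in HW by auto. unfold Wtarget in HW.
  assert (HB1 : Defs.bound dB dR <= 1).
  { pose proof (bound_pos _ _ H1 H2). pose proof (bound_sq _ _ H1 H2).
    assert (1 <= INR dB) by (apply (le_INR 1); lia). assert (1 <= INR dR) by (apply (le_INR 1); lia).
    assert (/ INR dB <= 1) by (rewrite <- Rinv_1; apply Rinv_le_contravar; lra).
    assert (/ INR dR <= 1) by (rewrite <- Rinv_1; apply Rinv_le_contravar; lra).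
    assert (0 < / INR dB) by (apply Rinv_0_lt_compat; lra).
    assert (0 < / INR dR) by (apply Rinv_0_lt_compat; lra).
    nra. }
  assert (Hpos : forall d : nat, (1 <= d)%nat -> Cplus (RtoC 1) (RtoC (/ INR d)) <> RtoC 0).
  { intros d Hd E. injection E as E.
    assert (0 < / INR d) by (apply Rinv_0_lt_compat, lt_0_INR; lia). lra. }
  destruct (Cmult_eq0 _ _ HW) as [HX|HY].
  - destruct (Cmult_eq0 _ _ HX) as [H'|H'].
    + destruct (Cmult_eq0 _ _ H') as [H''|H''].
      * left; auto.
      * right. destruct (Cmult_eq0 _ _ H''); auto.
    + exfalso. destruct (Cmult_eq0 _ _ H') as [H''|H''].
      apply (Hpos dB H1 H''). apply (Hpos dR H2 H'').
  - exfalso. assert (HM1 : mu_minus dB dR lam = RtoC 1).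
    { apply Ceq; [apply (f_equal fst) in HY | apply (f_equal snd) in HY]; simpl in HY; simpl; lra. }
    rewrite HM1 in Hm. rewrite Cmod_R, Rabs_R1 in Hm. lra.
Qed.

(** realness via a Wronskian-type argument *)

Lemma deriv_zero_on (phi : R -> R) x l : 0 < x < 1 -> (forall t, 0 < t < 1 -> phi t = 0) ->
  is_derive phi x l -> l = 0.
Proof.
  intros Hx Hz Hd.
  assert (Hd0 : is_derive phi x 0).
  { apply (is_derive_ext_loc (fun _ => 0)).
    assert (Hp : 0 < Rmin x (1 - x)) by (apply Rmin_pos; lra).
    exists (mkposreal _ Hp). intros t Ht. simpl in Ht.
    unfold ball in Ht; simpl in Ht; unfold AbsRing_ball, abs, minus, plus, opp in Ht; simpl in Ht.
    pose proof (Rmin_l x (1-x)). pose proof (Rmin_r x (1-x)).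
    symmetry. apply Hz. apply Rabs_def2 in Ht. lra.
    exact (is_derive_const (K:=R_AbsRing) (V:=R_NormedModule) 0 x). }
  apply is_derive_unique in Hd. apply is_derive_unique in Hd0. congruence.
Qed.

Lemma cont_zero_at0 (phi : R -> R) l : is_derive phi 0 l ->
  (forall t, 0 < t < 1 -> phi t = 0) -> phi 0 = 0.
Proof.
  intros Hd Hz.
  assert (Hc : continuity_pt phi 0).
  { apply continuity_pt_filterlim.
    exact (ex_derive_continuous (K:=R_AbsRing) (V:=R_NormedModule) phi 0 (ex_intro _ l Hd)). }
  destruct (Req_dec (phi 0) 0) as [E|E]; auto. exfalso.
  assert (He : 0 < Rabs (phi 0)) by (apply Rabs_pos_lt; auto).
  destruct (Hc _ He) as [alp [Ha Hb]].
  set (t := Rmin (alp/2) (1/2)).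
  assert (Ht : 0 < t) by (apply Rmin_pos; lra).
  assert (Ht2 : t <= alp / 2) by apply Rmin_l. assert (Ht3 : t <= 1/2) by apply Rmin_r.
  specialize (Hb t). simpl in Hb. unfold R_dist in Hb.
  rewrite Hz in Hb by lra.
  assert (Rabs (0 - phi 0) < Rabs (phi 0)).
  { apply Hb. split. unfold D_x, no_cond. split; auto; lra.
    rewrite Rminus_0_r, Rabs_pos_eq; lra. }
  rewrite Rminus_0_l, Rabs_Ropp in H. lra.
Qed.

Lemma realness (lam : C) (y d : R -> C) :
  CD y d -> CD d (fun x => Copp (Cmult lam (y x))) ->
  snd (d 0) * fst (y 0) - fst (d 0) * snd (y 0) = 0 ->
  snd (d 1) * fst (y 1) - fst (d 1) * snd (y 1) = 0 ->
  (y 0 <> RtoC 0 \/ d 0 <> RtoC 0) -> snd lam = 0.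
Proof.
  intros Hy Hd H0 H1 Hnz.
  destruct (Req_dec (snd lam) 0) as [E|E]; auto. exfalso.
  set (l1 := fst lam). set (l2 := snd lam).
  set (g := fun x => l2 * (snd (d x) * fst (y x) - fst (d x) * snd (y x))).
  set (g' := fun x => - (l2 * l2) * (fst (y x) * fst (y x) + snd (y x) * snd (y x))).
  assert (Hg : forall x, is_derive g x (g' x)).
  { intros x. destruct (Hy x) as [Hy1 Hy2]. destruct (Hd x) as [Hd1 Hd2].
    unfold g. eapply is_derive_val.
    apply (is_derive_scal (fun x => (snd (d x) * fst (y x) - fst (d x) * snd (y x)))).
    apply dminus; apply dmul; eauto.
    rewrite fst_opp_mult, snd_opp_mult. unfold g'. fold l1 l2. Req. ring. }
  assert (Hg'le : forall x, g' x <= 0).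
  { intros x. unfold g'. pose proof (Rle_0_sqr l2). unfold Rsqr in *.
    assert (0 <= fst (y x) * fst (y x) + snd (y x) * snd (y x)) by nra. nra. }
  assert (Hg0 : g 0 = 0) by (unfold g; rewrite H0; ring).
  assert (Hg1 : g 1 = 0) by (unfold g; rewrite H1; ring).
  assert (Hgz : forall x, 0 < x < 1 -> g x = 0).
  { intros x Hx.
    destruct (MVT_cor2 g g' 0 x) as [c1 [Hc1 _]]. lra.
    intros c _. apply is_derive_Reals, Hg.
    destruct (MVT_cor2 g g' x 1) as [c2 [Hc2 _]]. lra.
    intros c _. apply is_derive_Reals, Hg.
    pose proof (Hg'le c1). pose proof (Hg'le c2). nra. }
  assert (Hyz : forall x, 0 < x < 1 -> fst (y x) = 0 /\ snd (y x) = 0).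
  { intros x Hx. pose proof (deriv_zero_on g x (g' x) Hx Hgz (Hg x)) as Z.
    unfold g' in Z.
    assert (0 < l2 * l2) by (pose proof (Rsqr_pos_lt l2 E) as Q; unfold Rsqr in Q; exact Q).
    assert (fst (y x) * fst (y x) + snd (y x) * snd (y x) = 0) by nra.
    split; nra. }
  assert (Hdz : forall x, 0 < x < 1 -> fst (d x) = 0 /\ snd (d x) = 0).
  { intros x Hx. destruct (Hy x) as [Hy1 Hy2]. split.
    apply (deriv_zero_on (fun t => fst (y t)) x); auto. intros; apply Hyz; auto.
    apply (deriv_zero_on (fun t => snd (y t)) x); auto. intros; apply Hyz; auto. }
  destruct (Hy 0) as [Hy1 Hy2]. destruct (Hd 0) as [Hd1 Hd2].
  assert (A1 := cont_zero_at0 _ _ Hy1 (fun t Ht => proj1 (Hyz t Ht))).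
  assert (A2 := cont_zero_at0 _ _ Hy2 (fun t Ht => proj2 (Hyz t Ht))).
  assert (A3 := cont_zero_at0 _ _ Hd1 (fun t Ht => proj1 (Hdz t Ht))).
  assert (A4 := cont_zero_at0 _ _ Hd2 (fun t Ht => proj2 (Hdz t Ht))).
  destruct Hnz as [N|N]; apply N; apply Ceq; simpl; auto.
Qed.

Lemma zi_real lam : snd lam = 0 -> forall n, zi lam n = 0.
Proof. intros H n. induction n. reflexivity. rewrite zi_S, IHn, H. ring. Qed.
Lemma zr_real lam : snd lam = 0 -> forall n, zr lam n = (- fst lam)^n.
Proof. intros H n. induction n. reflexivity. rewrite zr_S, IHn, H. simpl. ring. Qed.

Lemma SX_zero x : SX (fun _ => 0) x = 0.
Proof. unfold SX. rewrite (Series_ext _ (fun _ => 0)) by (intros; ring). apply Series_zero. Qed.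
Lemma CX_zero x : CX (fun _ => 0) x = 0.
Proof. unfold CX. rewrite (Series_ext _ (fun _ => 0)) by (intros; ring). apply Series_zero. Qed.
Lemma CX_ext (a b : nat -> R) x : (forall n, a n = b n) -> CX a x = CX b x.
Proof. intros H. unfold CX. apply Series_ext. intros n. rewrite H. auto. Qed.

Lemma sinw_real lam x : snd lam = 0 -> sinw lam x = RtoC (SX (fun n => (- fst lam)^n) x).
Proof.
  intros H. apply Ceq; cbn [RtoC fst snd].
  - rewrite sinw_fst. apply SX_ext. apply zr_real; auto.
  - rewrite sinw_snd. rewrite (SX_ext _ (fun _ => 0)). apply SX_zero. apply zi_real; auto.
Qed.
Lemma cosw_real lam x : snd lam = 0 -> cosw lam x = RtoC (CX (fun n => (- fst lam)^n) x).
Proof.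
  intros H. apply Ceq; cbn [RtoC fst snd].
  - rewrite cosw_fst. apply CX_ext. apply zr_real; auto.
  - rewrite cosw_snd. rewrite (CX_ext _ (fun _ => 0)). apply CX_zero. apply zi_real; auto.
Qed.

Lemma pw_bound l n : Rabs ((-l)^n) <= 1 * (Rabs l)^n.
Proof. rewrite <- RPow_abs, Rabs_Ropp. lra. Qed.

Lemma SX_ge1 q : 0 <= q -> 1 <= SX (fun n => q^n) 1.
Proof.
  intros Hq. unfold SX.
  assert (Hb : forall n, Rabs (q^n) <= 1 * (Rabs q)^n) by (intros; rewrite <- RPow_abs; lra).
  pose proof (ex_SX _ 1 (Rabs q) (Rabs_pos q) Hb 1) as Hex.
  rewrite Series_incr_1 by exact Hex.
  assert (0 <= Series (fun k => q ^ S k * (1 ^ (2 * S k + 1) / INR (fact (2 * S k + 1))))).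
  { rewrite <- Series_zero. apply Series_le.
    intros n. split. lra. rewrite pow1. apply Rmult_le_pos. apply pow_le; auto.
    left; apply Rdiv_lt_0_compat; [lra|apply fact_pos'].
    apply ex_series_incr_1 in Hex. exact Hex. }
  match goal with |- 1 <= ?a + ?b => replace a with 1 by (simpl; field) end. lra.
Qed.

Lemma CX_ge1 q : 0 <= q -> 1 <= CX (fun n => q^n) 1.
Proof.
  intros Hq. unfold CX.
  assert (Hb : forall n, Rabs (q^n) <= 1 * (Rabs q)^n) by (intros; rewrite <- RPow_abs; lra).
  pose proof (ex_CX _ 1 (Rabs q) (Rabs_pos q) Hb 1) as Hex.
  rewrite Series_incr_1 by exact Hex.
  assert (0 <= Series (fun k => q ^ S k * (1 ^ (2 * S k) / INR (fact (2 * S k))))).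
  { rewrite <- Series_zero. apply Series_le.
    intros n. split. lra. rewrite pow1. apply Rmult_le_pos. apply pow_le; auto.
    left; apply Rdiv_lt_0_compat; [lra|apply fact_pos'].
    apply ex_series_incr_1 in Hex. exact Hex. }
  match goal with |- 1 <= ?a + ?b => replace a with 1 by (simpl; field) end. lra.
Qed.

Lemma SC_trig l : 0 < l -> forall x,
  SX (fun n => (-l)^n) x = sin (sqrt l * x) / sqrt l /\ CX (fun n => (-l)^n) x = cos (sqrt l * x).
Proof.
  intros Hl x.
  set (w := sqrt l). assert (Hw : 0 < w) by (apply sqrt_lt_R0; auto).
  assert (Hw2 : w * w = l) by (apply sqrt_sqrt; lra).
  set (z := fun n : nat => (-l)^n).
  assert (Hz : forall n, Rabs (z n) <= 1 * (Rabs l)^n) by apply pw_bound.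
  set (u := fun t => SX z t - sin (w * t) / w).
  set (v := fun t => CX z t - cos (w * t)).
  assert (Hu : forall t, is_derive u t (v t)).
  { intros t. unfold u, v. apply dminus. apply (D_SX z 1 (Rabs l) (Rabs_pos l) Hz).
    auto_derive; auto. field. lra. }
  assert (Hv : forall t, is_derive v t (- l * u t)).
  { intros t. unfold u, v. eapply is_derive_val. apply dminus.
    apply (D_CX z 1 (Rabs l) (Rabs_pos l) Hz). auto_derive; auto.
    rewrite (SX_ext _ (fun n => (-l) * z n)) by (intros n; unfold z; simpl; ring).
    unfold SX at 1. rewrite (Series_ext _ (fun n => (-l) * (z n * (t ^ (2 * n + 1) / INR (fact (2 * n + 1)))))) by (intros; ring).
    rewrite Series_scal_l. fold (SX z t). rewrite <- Hw2. Req. field. lra. }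
  set (E := fun t => v t * v t + l * (u t * u t)).
  assert (HE : forall t, is_derive E t 0).
  { intros t. unfold E. eapply is_derive_val. apply dplus. apply dmul; apply Hv.
    apply is_derive_scal. apply dmul; apply Hu. Req. ring. }
  assert (E0 : E 0 = 0).
  { unfold E, u, v. rewrite SX_0, (CX_0 z 1 (Rabs l) (Rabs_pos l) Hz).
    unfold z. rewrite Rmult_0_r, sin_0, cos_0. simpl. field. lra. }
  assert (Ex : E x = 0) by (rewrite (const_der E HE x 0); auto).
  unfold E in Ex.
  assert (v x = 0 /\ u x = 0).
  { pose proof (Rle_0_sqr (v x)). pose proof (Rle_0_sqr (u x)). unfold Rsqr in *.
    assert (Hvv : v x * v x = 0) by nra. assert (Huu : u x * u x = 0) by nra.
    split; [destruct (Rmult_integral _ _ Hvv) | destruct (Rmult_integral _ _ Huu)]; auto. }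
  unfold u, v in H. destruct H. split; lra.
Qed.

Lemma C0_fst_snd (a : C) : a = RtoC 0 -> fst a = 0 /\ snd a = 0.
Proof. intros ->. simpl. auto. Qed.

Lemma s_zero_real lam : ss lam = RtoC 0 -> snd lam = 0.
Proof.
  intros Hs. apply (realness lam (sinw lam) (cosw lam) (CD_sinw lam) (CD_cosw lam)).
  - rewrite sinw_0. simpl. ring.
  - fold (ss lam). rewrite Hs. simpl. ring.
  - right. rewrite cosw_0. intros E. injection E. lra.
Qed.

Lemma c_zero_real lam : cc lam = RtoC 0 -> snd lam = 0.
Proof.
  intros Hc.
  apply (realness lam (cosw lam) (fun x => Copp (Cmult lam (sinw lam x))) (CD_cosw lam)).
  - eapply CD_ext; [| | apply CD_opp; apply CD_mconst; apply CD_sinw].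
    intros; reflexivity. intros; reflexivity.
  - rewrite sinw_0, cosw_0. simpl. ring.
  - fold (cc lam). rewrite Hc. simpl. ring.
  - left. rewrite cosw_0. intros E. injection E. lra.
Qed.

Lemma real_pos_s lam : snd lam = 0 -> ss lam = RtoC 0 -> 0 < fst lam.
Proof.
  intros Hr Hs. destruct (Rlt_or_le 0 (fst lam)) as [H|H]; auto. exfalso.
  unfold ss in Hs. rewrite sinw_real in Hs by auto.
  pose proof (SX_ge1 (- fst lam) ltac:(lra)).
  injection Hs as E. lra.
Qed.

Lemma real_pos_c lam : snd lam = 0 -> cc lam = RtoC 0 -> 0 < fst lam.
Proof.
  intros Hr Hs. destruct (Rlt_or_le 0 (fst lam)) as [H|H]; auto. exfalso.
  unfold cc in Hs. rewrite cosw_real in Hs by auto.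
  pose proof (CX_ge1 (- fst lam) ltac:(lra)).
  injection Hs as E. lra.
Qed.

Lemma s_zero_char lam : ss lam = RtoC 0 ->
  snd lam = 0 /\ 0 < fst lam /\ exists k : Z, (1 <= k)%Z /\ sqrt (fst lam) = IZR k * PI.
Proof.
  intros Hs. pose proof (s_zero_real lam Hs) as Hr. pose proof (real_pos_s lam Hr Hs) as Hp.
  split; auto. split; auto.
  assert (Hw : 0 < sqrt (fst lam)) by (apply sqrt_lt_R0; auto).
  unfold ss in Hs. rewrite sinw_real in Hs by auto.
  destruct (SC_trig (fst lam) Hp 1) as [HS _]. rewrite HS in Hs.
  injection Hs as E. rewrite Rmult_1_r in E.
  assert (Hsin : sin (sqrt (fst lam)) = 0).
  { apply (f_equal (fun t => t * sqrt (fst lam))) in E. field_simplify in E; lra. }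
  destruct (sin_eq_0_0 _ Hsin) as [k Hk]. exists k. split; auto.
  assert (0 < IZR k) by (pose proof PI_RGT_0; rewrite Hk in Hw; nra).
  apply lt_IZR in H. lia.
Qed.

Lemma c_zero_char lam : cc lam = RtoC 0 ->
  snd lam = 0 /\ 0 < fst lam /\ exists k : Z, (0 <= k)%Z /\ sqrt (fst lam) = IZR k * PI + PI / 2.
Proof.
  intros Hs. pose proof (c_zero_real lam Hs) as Hr. pose proof (real_pos_c lam Hr Hs) as Hp.
  split; auto. split; auto.
  assert (Hw : 0 < sqrt (fst lam)) by (apply sqrt_lt_R0; auto).
  unfold cc in Hs. rewrite cosw_real in Hs by auto.
  destruct (SC_trig (fst lam) Hp 1) as [_ HC]. rewrite HC in Hs.
  injection Hs as E. rewrite Rmult_1_r in E.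
  destruct (cos_eq_0_0 _ E) as [k Hk]. exists k. split; auto.
  destruct (Z.lt_ge_cases k 0) as [Hl|Hl]; [|lia].
  assert (IZR k <= -1) by (apply IZR_le; lia).
  pose proof PI_RGT_0. rewrite Hk in Hw. nra.
Qed.

Lemma sig2_form dB dR lam : (1 <= dB)%nat -> (1 <= dR)%nat -> sigma2 dB dR lam ->
  exists j : Z, (1 <= j)%Z /\ lam = RtoC ((IZR j * (PI / 2))^2).
Proof.
  intros H1 H2 Hs. destruct (sig2_sc _ _ _ H1 H2 Hs) as [E|E].
  - destruct (s_zero_char lam E) as (Hr & Hp & k & Hk & Hw).
    exists (2 * k)%Z. split. lia. apply Ceq; cbn [RtoC fst snd]; auto.
    rewrite <- (sqrt_sqrt (fst lam)) by lra. rewrite Hw, mult_IZR. field.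
  - destruct (c_zero_char lam E) as (Hr & Hp & k & Hk & Hw).
    exists (2 * k + 1)%Z. split. lia. apply Ceq; cbn [RtoC fst snd]; auto.
    rewrite <- (sqrt_sqrt (fst lam)) by lra. rewrite Hw, plus_IZR, mult_IZR. field.
Qed.

Lemma sq_gap (j j' : Z) : (1 <= j)%Z -> (1 <= j')%Z -> j <> j' ->
  3 <= Rabs (IZR j' ^ 2 - IZR j ^ 2).
Proof.
  intros H1 H2 H3.
  assert (H : (3 <= j' * j' - j * j)%Z \/ (3 <= j * j - j' * j')%Z) by nia.
  destruct H as [H|H]; apply IZR_le in H; rewrite minus_IZR, !mult_IZR in H; simpl.
  - rewrite Rabs_pos_eq; nra.
  - rewrite Rabs_left1; nra.
Qed.

Lemma part1 dB dR : (1 <= dB)%nat -> (1 <= dR)%nat ->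
  forall lam : C, sigma2 dB dR lam -> snd lam = 0.
Proof.
  intros H1 H2 lam Hs. destruct (sig2_form _ _ _ H1 H2 Hs) as (j & _ & ->). reflexivity.
Qed.

Lemma part2 dB dR : (1 <= dB)%nat -> (1 <= dR)%nat ->
  forall lam : C, sigma2 dB dR lam ->
     exists eps : R, 0 < eps /\
       forall mu : C, sigma2 dB dR mu -> Cmod (Cminus mu lam) < eps -> mu = lam.
Proof.
  intros H1 H2 lam Hs. exists 1. split. lra.
  intros mu Hm Hd.
  destruct (sig2_form _ _ _ H1 H2 Hs) as (j & Hj & ->).
  destruct (sig2_form _ _ _ H1 H2 Hm) as (j' & Hj' & ->).
  destruct (Z.eq_dec j j') as [->|Hne]; auto. exfalso.
  pose proof (sq_gap j j' Hj Hj' Hne) as G.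
  assert (Cminus (RtoC ((IZR j' * (PI / 2)) ^ 2)) (RtoC ((IZR j * (PI / 2)) ^ 2))
          = RtoC ((PI/2)^2 * (IZR j' ^ 2 - IZR j ^ 2))) by (apply Ceq; simpl; ring).
  rewrite H, Cmod_R, Rabs_mult, Rabs_pos_eq in Hd by (apply pow2_ge_0).
  pose proof PI2_3_2. nra.
Qed.

Lemma Cminus_eq0 (a b : C) : Cminus a b = RtoC 0 -> b = a.
Proof. intros H. replace b with (Cminus a (Cminus a b)) by ring. rewrite H. ring. Qed.

Lemma cc2_s0 lam : ss lam = RtoC 0 -> Cmult (cc lam) (cc lam) = RtoC 1.
Proof.
  intros Hs. pose proof (pyth_x lam 1) as P. fold (cc lam) (ss lam) in P.
  rewrite <- P, Hs. ring.
Qed.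

Lemma eig_s0 dB dR lam m : ss lam = RtoC 0 ->
  is_eig2 (T0 dB dR lam) m <->
  Cmult (Cminus (RtoC 1) m) (Cminus (Cmult (RtoC (/ INR dB)) (RtoC (/ INR dR))) m) = RtoC 0.
Proof.
  intros Hs. pose proof (cc2_s0 lam Hs) as Hc.
  destruct (T0 dB dR lam) as [[A B] [C D]] eqn:HT.
  cbv beta iota zeta delta [T0 m2mul M0 Jd] in HT. unfold ccp, ssp in HT.
  rewrite Hs in HT. injection HT as HA HB HC HD.
  unfold is_eig2.
  assert (Hid : Cminus (Cmult (Cminus A m) (Cminus D m)) (Cmult B C) =
     Cmult (Cminus (Cmult (cc lam) (cc lam)) m)
           (Cminus (Cmult (Cmult (cc lam) (cc lam)) (Cmult (RtoC (/ INR dB)) (RtoC (/ INR dR)))) m)).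
  { subst A B C D. ring. }
  rewrite Hc in Hid. rewrite Hid.
  replace (Cmult (RtoC 1) (Cmult (RtoC (/ INR dB)) (RtoC (/ INR dR)))) with
    (Cmult (RtoC (/ INR dB)) (RtoC (/ INR dR))) by ring.
  tauto.
Qed.

Lemma eig_c0 dB dR lam m : cc lam = RtoC 0 ->
  is_eig2 (T0 dB dR lam) m ->
  Cmult (Cplus m (RtoC (/ INR dB))) (Cplus m (RtoC (/ INR dR))) = RtoC 0.
Proof.
  intros Hc He. pose proof (pyth_x lam 1) as P. fold (cc lam) (ss lam) in P.
  assert (Ht : Cmult lam (Cmult (ss lam) (ss lam)) = RtoC 1) by (rewrite <- P, Hc; ring).
  destruct (T0 dB dR lam) as [[A B] [C D]] eqn:HT.
  cbv beta iota zeta delta [T0 m2mul M0 Jd] in HT. unfold ccp, ssp in HT.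
  rewrite Hc in HT. injection HT as HA HB HC HD.
  unfold is_eig2 in He.
  assert (Hid : Cminus (Cmult (Cminus A m) (Cminus D m)) (Cmult B C) =
     Cmult (Cplus m (Cmult (RtoC (/ INR dB)) (Cmult lam (Cmult (ss lam) (ss lam)))))
           (Cplus m (Cmult (RtoC (/ INR dR)) (Cmult lam (Cmult (ss lam) (ss lam)))))).
  { subst A B C D. ring. }
  rewrite Ht in Hid. rewrite <- He, Hid. ring.
Qed.

Lemma bound_lt1 dB dR : (1 <= dB)%nat -> (1 <= dR)%nat -> (1 < dR * dB)%nat ->
  Defs.bound dB dR < 1.
Proof.
  intros H1 H2 H3. pose proof (bound_pos _ _ H1 H2). pose proof (bound_sq _ _ H1 H2).
  assert (2 <= INR dR * INR dB) by (rewrite <- mult_INR; apply (le_INR 2); lia).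
  assert (0 < INR dB) by (apply lt_0_INR; lia). assert (0 < INR dR) by (apply lt_0_INR; lia).
  assert (/ INR dB * / INR dR <= / 2).
  { rewrite <- Rinv_mult. apply Rinv_le_contravar. lra. nra. }
  nra.
Qed.

Lemma bound_le1 dB dR : (1 <= dB)%nat -> (1 <= dR)%nat -> Defs.bound dB dR <= 1.
Proof.
  intros H1 H2. pose proof (bound_pos _ _ H1 H2). pose proof (bound_sq _ _ H1 H2).
  assert (1 <= INR dB) by (apply (le_INR 1); lia). assert (1 <= INR dR) by (apply (le_INR 1); lia).
  assert (/ INR dB <= 1) by (rewrite <- Rinv_1; apply Rinv_le_contravar; lra).
  assert (/ INR dR <= 1) by (rewrite <- Rinv_1; apply Rinv_le_contravar; lra).
  assert (0 < / INR dB) by (apply Rinv_0_lt_compat; lra).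
  assert (0 < / INR dR) by (apply Rinv_0_lt_compat; lra).
  nra.
Qed.

Lemma part3 dB dR : (1 <= dB)%nat -> (1 <= dR)%nat ->
  (1 < dR * dB)%nat -> forall lam : C, ss lam = RtoC 0 -> sigma2 dB dR lam.
Proof.
  intros H1 H2 H3 lam Hs. split.
  - intros [m [He Hm]]. apply (eig_s0 _ _ _ _ Hs) in He.
    pose proof (bound_lt1 _ _ H1 H2 H3). pose proof (bound_pos _ _ H1 H2).
    pose proof (bound_sq _ _ H1 H2).
    destruct (Cmult_eq0 _ _ He) as [E|E]; apply Cminus_eq0 in E; subst m.
    + rewrite Cmod_R, Rabs_R1 in Hm. lra.
    + rewrite Cmod_xy in Hm by auto. nra.
  - rewrite Wr_val. unfold ccp. rewrite Hs. ring.
Qed.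

Lemma sinw_pos_pt lam : ss lam = RtoC 0 -> exists x0, 0 < x0 <= 1/2 /\ sinw lam x0 <> RtoC 0.
Proof.
  intros Hs. destruct (s_zero_char lam Hs) as (Hr & Hp & k & Hk & Hw).
  assert (HkR : 1 <= IZR k) by (apply IZR_le; auto).
  pose proof PI_RGT_0.
  exists (/ (2 * IZR k)). split. split.
  apply Rinv_0_lt_compat; lra.
  replace (1/2) with (/ (2 * 1)) by field. apply Rinv_le_contravar; lra.
  rewrite sinw_real by auto. destruct (SC_trig (fst lam) Hp (/ (2 * IZR k))) as [HS _].
  rewrite HS, Hw. replace (IZR k * PI * / (2 * IZR k)) with (PI / 2) by (field; lra).
  rewrite sin_PI2. intros E. injection E as E.
  assert (0 < IZR k * PI) by nra.
  apply (f_equal (fun t => t * (IZR k * PI))) in E. field_simplify in E; lra.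
Qed.

Lemma part4 dB dR : (1 <= dB)%nat -> (1 <= dR)%nat ->
  forall lam : C, ~ sigma1 dB dR lam -> ss lam = RtoC 0 ->
     (exists x, 0 <= x <= 1 /\ Ufun dB dR lam x <> RtoC 0) /\
     (exists x, 0 <= x <= 1 /\ Vfun dB dR lam x <> RtoC 0).
Proof.
  intros H1 H2 lam Hn Hs.
  destruct (mu_spec _ _ _ H1 H2 Hn) as [He Hm].
  pose proof (bound_le1 _ _ H1 H2).
  assert (Hm1 : Cminus (mu_minus dB dR lam) (RtoC 1) <> RtoC 0).
  { intros E. apply Cminus_eq0 in E. rewrite <- E, Cmod_R, Rabs_R1 in Hm. lra. }
  pose proof (cc2_s0 lam Hs) as Hc.
  destruct (sinw_pos_pt lam Hs) as (x0 & Hx0 & Hsx).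
  split.
  - exists (1 - x0). split. lra.
    assert (Ufun dB dR lam (1 - x0) =
            Copp (Cmult (Cminus (mu_minus dB dR lam) (Cmult (cc lam) (cc lam))) (sinw lam (1 - (1 - x0))))).
    { unfold Ufun, ccp. rewrite Hs. ring. }
    rewrite H0, Hc. replace (1 - (1 - x0)) with x0 by ring.
    intros E. apply (f_equal Copp) in E.
    replace (Copp (Copp (Cmult (Cminus (mu_minus dB dR lam) (RtoC 1)) (sinw lam x0)))) with
      (Cmult (Cminus (mu_minus dB dR lam) (RtoC 1)) (sinw lam x0)) in E by ring.
    replace (Copp (RtoC 0)) with (RtoC 0) in E by (apply Ceq; simpl; ring).
    destruct (Cmult_eq0 _ _ E); auto.
  - exists x0. split. lra.
    assert (Vfun dB dR lam x0 =
            Cmult (Cminus (mu_minus dB dR lam) (Cmult (cc lam) (cc lam))) (sinw lam x0)).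
    { unfold Vfun, ccp. rewrite Hs. ring. }
    rewrite H0, Hc. intros E. destruct (Cmult_eq0 _ _ E); auto.
Qed.

Lemma c0_excl dB dR lam : (1 <= dB)%nat -> (1 <= dR)%nat -> ~ sigma1 dB dR lam ->
  cc lam = RtoC 0 ->
  (forall x, Ufun dB dR lam x = RtoC 0) \/ (forall x, Vfun dB dR lam x = RtoC 0).
Proof.
  intros H1 H2 Hn Hc.
  destruct (mu_spec _ _ _ H1 H2 Hn) as [He _].
  pose proof (eig_c0 _ _ _ _ Hc He) as E.
  pose proof (pyth_x lam 1) as P. fold (cc lam) (ss lam) in P.
  assert (Ht : Cmult lam (Cmult (ss lam) (ss lam)) = RtoC 1) by (rewrite <- P, Hc; ring).
  destruct (Cmult_eq0 _ _ E) as [E1|E1].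
  - right. intros x.
    assert (Hm : mu_minus dB dR lam = Copp (RtoC (/ INR dB))).
    { replace (mu_minus dB dR lam) with (Cminus (Cplus (mu_minus dB dR lam) (RtoC (/ INR dB))) (RtoC (/ INR dB))) by ring.
      rewrite E1. ring. }
    unfold Vfun, ccp. rewrite Hc, Hm.
    transitivity (Cmult (Cmult (RtoC (/ INR dB)) (Cminus (Cmult lam (Cmult (ss lam) (ss lam))) (RtoC 1))) (sinw lam x)).
    ring. rewrite Ht. ring.
  - left. intros x.
    assert (Hm : mu_minus dB dR lam = Copp (RtoC (/ INR dR))).
    { replace (mu_minus dB dR lam) with (Cminus (Cplus (mu_minus dB dR lam) (RtoC (/ INR dR))) (RtoC (/ INR dR))) by ring.
      rewrite E1. ring. }
    unfold Ufun, ccp. rewrite Hc, Hm.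
    transitivity (Copp (Cmult (Cmult (RtoC (/ INR dR)) (Cminus (Cmult lam (Cmult (ss lam) (ss lam))) (RtoC 1))) (sinw lam (1 - x)))).
    ring. rewrite Ht. ring.
Qed.

(** * Tree eigenfunction *)
Definition lsum {A} (h : A -> R) (l : list A) := fold_right Rplus 0 (map h l).

Lemma lsum_app {A} (h : A -> R) l1 l2 : lsum h (l1 ++ l2) = lsum h l1 + lsum h l2.
Proof. unfold lsum. rewrite map_app, fold_right_app. induction l1; simpl; [ring|]. rewrite IHl1. ring. Qed.

Lemma lsum_map {A B} (h : B -> R) (f : A -> B) l : lsum h (map f l) = lsum (fun x => h (f x)) l.
Proof. unfold lsum. rewrite map_map. auto. Qed.

Lemma lsum_flat_map {A B} (h : B -> R) (f : A -> list B) l :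
  lsum h (flat_map f l) = lsum (fun x => lsum h (f x)) l.
Proof. induction l; simpl. reflexivity. rewrite lsum_app, IHl. reflexivity. Qed.

Lemma lsum_const {A} (c : R) (l : list A) : lsum (fun _ => c) l = INR (length l) * c.
Proof. induction l; unfold lsum in *; cbn [map fold_right length]. simpl; ring. rewrite IHl, S_INR. ring. Qed.

Lemma lsum_le {A} (h h' : A -> R) l : (forall x, In x l -> h x <= h' x) -> lsum h l <= lsum h' l.
Proof.
  induction l; intros H; unfold lsum in *; simpl. lra.
  apply Rplus_le_compat. apply H; simpl; auto. apply IHl. intros; apply H; simpl; auto.
Qed.

Lemma lsum_ext {A} (h h' : A -> R) l : (forall x, h x = h' x) -> lsum h l = lsum h' l.
Proof. intros H. unfold lsum. f_equal. apply map_ext. auto. Qed.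

Lemma lsum_scal {A} (c : R) (h : A -> R) l : lsum (fun x => c * h x) l = c * lsum h l.
Proof. induction l; unfold lsum in *; simpl. ring. rewrite IHl. ring. Qed.

Lemma lsum_nonneg {A} (h : A -> R) l : (forall x, 0 <= h x) -> 0 <= lsum h l.
Proof. intros H. induction l; unfold lsum in *; simpl. lra. pose proof (H a). lra. Qed.

Section LI.
Variable A : Type.
Variable eq_dec : forall x y : A, {x = y} + {x <> y}.
Variable h : A -> R.
Hypothesis hpos : forall x, 0 <= h x.

Lemma lsum_remove_le a L : lsum h (remove eq_dec a L) <= lsum h L.
Proof.
  induction L; simpl. lra. destruct (eq_dec a a0).
  - subst. unfold lsum in *; simpl. pose proof (hpos a0). lra.
  - unfold lsum in *; simpl. lra.
Qed.

Lemma lsum_remove a L : In a L -> h a + lsum h (remove eq_dec a L) <= lsum h L.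
Proof.
  induction L; simpl. tauto. intros [E|I].
  - subst. destruct (eq_dec a a); [|congruence]. unfold lsum; simpl.
    pose proof (lsum_remove_le a L). unfold lsum in H. lra.
  - destruct (eq_dec a a0).
    + subst. unfold lsum; simpl. pose proof (lsum_remove_le a0 L). unfold lsum in H. lra.
    + unfold lsum in *; simpl. specialize (IHL I). lra.
Qed.

Lemma lsum_incl l L : NoDup l -> incl l L -> lsum h l <= lsum h L.
Proof.
  revert L. induction l as [|a l IH]; intros L Hn Hi.
  - unfold lsum; simpl. apply lsum_nonneg; auto.
  - inversion Hn; subst.
    assert (Ha : In a L) by (apply Hi; simpl; auto).
    assert (Hi' : incl l (remove eq_dec a L)).
    { intros x Hx. apply in_in_remove. intros ->; contradiction. apply Hi; simpl; auto. }
    specialize (IH _ H2 Hi'). pose proof (lsum_remove a L Ha).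
    unfold lsum in *; simpl. lra.
Qed.
End LI.


Lemma is_derive_valV (f : R -> C) x (l l' : C) :
  is_derive (V := prod_NormedModule R_AbsRing R_NormedModule R_NormedModule) f x l -> l = l' ->
  is_derive (V := prod_NormedModule R_AbsRing R_NormedModule R_NormedModule) f x l'.
Proof. intros H <-; exact H. Qed.

Lemma is_derive_RtoC (h : R -> R) x d : is_derive h x d ->
  is_derive (V := prod_NormedModule R_AbsRing R_NormedModule R_NormedModule)
    (fun t => RtoC (h t)) x (RtoC d).
Proof.
  intros H. pose proof (is_derive_scal_l (V := prod_NormedModule R_AbsRing R_NormedModule R_NormedModule) h x d (RtoC 1) H) as H'.
  eapply is_derive_valV. eapply is_derive_ext; [|exact H'].
  intros t. apply Ceq; simpl; unfold scal; simpl; unfold mult; simpl; ring.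
  apply Ceq; simpl; unfold scal; simpl; unfold mult; simpl; ring.
Qed.

Lemma filterlim_right0 (F : R -> C) :
  ex_derive (V := prod_NormedModule R_AbsRing R_NormedModule R_NormedModule) F 0 ->
  filterlim F (at_right 0) (locally (F 0)).
Proof.
  intros H. apply (filterlim_filter_le_1 (F := locally 0)).
  apply filter_le_within. exact (ex_derive_continuous (K:=R_AbsRing) (V:=prod_NormedModule R_AbsRing R_NormedModule R_NormedModule) F _ H).
Qed.

Lemma filterlim_left1 (F : R -> C) :
  ex_derive (V := prod_NormedModule R_AbsRing R_NormedModule R_NormedModule) F 1 ->
  filterlim F (at_left 1) (locally (F 1)).
Proof.
  intros H. apply (filterlim_filter_le_1 (F := locally 1)).
  apply filter_le_within. exact (ex_derive_continuous (K:=R_AbsRing) (V:=prod_NormedModule R_AbsRing R_NormedModule R_NormedModule) F _ H).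
Qed.

Lemma Csum_RtoC (h : list nat -> R) l : Csum (map (fun e => RtoC (h e)) l) = RtoC (lsum h l).
Proof.
  induction l; simpl. reflexivity. rewrite IHl. unfold lsum. simpl. apply Ceq; simpl; ring.
Qed.

Lemma RInt_scalR (c : R) (F : R -> R) a b : ex_RInt F a b ->
  RInt (fun x => c * F x) a b = c * RInt F a b.
Proof. intros H. exact (RInt_scal F a b c H). Qed.

Section Tree.
Variables dB dR : nat.
Hypothesis HdB : (1 <= dB)%nat.
Hypothesis HdR : (1 <= dR)%nat.
Hypothesis Hprod : (2 <= dR * dB)%nat.

Let nch := nchild dB dR.

Lemma nch_pos k : (1 <= nch k)%nat.
Proof. unfold nch, nchild. destruct (Nat.eqb k 0). lia. destruct (Nat.even k); lia. Qed.

Lemma nch_posR k : 0 < INR (nch k).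
Proof. apply lt_0_INR. pose proof (nch_pos k). lia. Qed.

Fixpoint prodk (k n : nat) : R :=
  match n with 0 => 1 | S n' => INR (nch k) * prodk (S k) n' end.

Lemma prodk_pos k n : 0 < prodk k n.
Proof. revert k. induction n; intros k; simpl. lra. apply Rmult_lt_0_compat. apply nch_posR. auto. Qed.

Lemma prodk_snoc k n : prodk k (S n) = prodk k n * INR (nch (k + n)).
Proof.
  revert k. induction n; intros k.
  - simpl. rewrite Nat.add_0_r. ring.
  - change (prodk k (S (S n))) with (INR (nch k) * prodk (S k) (S n)).
    rewrite IHn. replace (S k + n)%nat with (k + S n)%nat by lia. simpl. ring.
Qed.

Definition sig (i : nat) : R := if Nat.eqb i 0 then 1 else if Nat.eqb i 1 then -1 else 0.

Definition alpha (w : list nat) : R :=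
  match w with [] => 0 | i :: w' => sig i * (-1)^(length w') / prodk 1 (length w') end.

Lemma alpha_snoc v i : v <> [] -> alpha (v ++ [i]) = - alpha v / INR (nch (length v)).
Proof.
  intros Hv. destruct v as [|i0 v']. congruence.
  simpl. rewrite length_app. simpl. rewrite Nat.add_1_r. rewrite prodk_snoc.
  replace (1 + length v')%nat with (S (length v')) by lia.
  pose proof (prodk_pos 1 (length v')). pose proof (nch_posR (S (length v'))).
  simpl. field. split; lra.
Qed.

Lemma sig_seq2 s n : (2 <= s)%nat -> lsum sig (seq s n) = 0.
Proof.
  revert s. induction n; intros s Hs. reflexivity.
  simpl. unfold lsum in *; simpl. rewrite IHn by lia.
  unfold sig. destruct (Nat.eqb_spec s 0). lia. destruct (Nat.eqb_spec s 1). lia. ring.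
Qed.

Lemma kirchhoff_sum v : lsum alpha (incident dB dR v) = 0.
Proof.
  unfold incident. destruct v as [|i0 v'].
  - change (lsum alpha (map (fun i => [i]) (seq 0 (S dR))) = 0).
    rewrite lsum_map. replace (S dR) with (S (S (dR - 1))) by lia.
    cbn [seq]. unfold lsum; cbn [map fold_right].
    fold (lsum (fun x => alpha [x]) (seq 2 (dR - 1))).
    rewrite (lsum_ext _ sig) by (intros x; unfold alpha; simpl; field).
    rewrite sig_seq2 by lia. unfold alpha; simpl. unfold sig; simpl. field.
  - change ((match i0 :: v' with [] => [] | _ => [i0 :: v'] end) ++
       map (fun i => (i0 :: v') ++ [i]) (seq 0 (nchild dB dR (length (i0 :: v')))))
     with ([i0 :: v'] ++ map (fun i => (i0 :: v') ++ [i]) (seq 0 (nch (length (i0 :: v'))))).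
    rewrite lsum_app, lsum_map.
    rewrite (lsum_ext (fun x => alpha ((i0 :: v') ++ [x])) (fun _ => - alpha (i0 :: v') / INR (nch (length (i0 :: v'))))).
    2: { intros x. apply alpha_snoc. congruence. }
    rewrite lsum_const, length_seq. unfold lsum; simpl.
    pose proof (nch_posR (S (length v'))). pose proof (prodk_pos 1 (length v')).
    unfold nch in *. field. split; lra.
Qed.

Fixpoint words (k n : nat) : list (list nat) :=
  match n with
  | 0 => [[]]
  | S n' => flat_map (fun a => map (cons a) (words (S k) n')) (seq 0 (nch k))
  end.

Lemma words_complete w : forall k, valid_from dB dR k w -> In w (words k (length w)).
Proof.
  induction w as [|a w IH]; intros k Hv. simpl; auto.
  destruct Hv as [Ha Hv]. simpl. apply in_flat_map. exists a. split.
  apply in_seq. fold nch in Ha. lia.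
  apply in_map. apply IH; auto.
Qed.

Lemma words_len k n w : In w (words k n) -> length w = n.
Proof.
  revert k w. induction n; intros k w H; simpl in H.
  - destruct H as [<-|[]]; auto.
  - apply in_flat_map in H. destruct H as [a [_ H]]. apply in_map_iff in H.
    destruct H as [w' [<- H]]. simpl. f_equal. eapply IHn; eauto.
Qed.

Lemma words_sum_const k n c : lsum (fun _ => c) (words k n) = c * prodk k n.
Proof.
  revert k. induction n; intros k.
  - unfold lsum; simpl. ring.
  - simpl words. rewrite lsum_flat_map.
    rewrite (lsum_ext _ (fun _ => c * prodk (S k) n)).
    + rewrite lsum_const, length_seq. simpl. ring.
    + intros a. rewrite lsum_map. apply IHn.
Qed.

Definition aa (n : nat) := / prodk 1 n.

Lemma level_bound n : lsum (fun e => alpha e * alpha e) (words 0 (S n)) <= INR (S dR) * aa n.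
Proof.
  pose proof (prodk_pos 1 n) as Hp.
  eapply Rle_trans. apply (lsum_le _ (fun _ => / (prodk 1 n * prodk 1 n))).
  - intros e He. apply words_len in He. destruct e as [|i w]. discriminate.
    simpl in He. injection He as He. simpl alpha. rewrite He.
    assert (Hs : sig i * sig i <= 1) by (unfold sig; destruct (Nat.eqb i 0); [|destruct (Nat.eqb i 1)]; lra).
    assert (Hm : (-1)^n * (-1)^n = 1) by (rewrite <- Rpow_mult_distr; replace (-1 * -1) with 1 by ring; apply pow1).
    replace (sig i * (-1) ^ n / prodk 1 n * (sig i * (-1) ^ n / prodk 1 n))
      with ((sig i * sig i) * ((-1)^n * (-1)^n) / (prodk 1 n * prodk 1 n)) by (field; lra).
    rewrite Hm. unfold Rdiv. rewrite Rmult_1_r.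
    assert (0 < / (prodk 1 n * prodk 1 n)) by (apply Rinv_0_lt_compat; nra). nra.
  - rewrite words_sum_const. change (prodk 0 (S n)) with (INR (nch 0) * prodk 1 n). unfold aa.
    replace (nch 0) with (S dR) by reflexivity. right. field. lra.
Qed.

Lemma aa_S n : aa (S n) <= aa n.
Proof.
  unfold aa. rewrite prodk_snoc. pose proof (prodk_pos 1 n).
  assert (1 <= INR (nch (1 + n))) by (apply (le_INR 1), nch_pos).
  apply Rinv_le_contravar. lra. nra.
Qed.

Lemma nch_two n : 2 <= INR (nch (S n)) * INR (nch (S (S n))).
Proof.
  assert (H2 : 2 <= INR dR * INR dB) by (rewrite <- mult_INR; apply (le_INR 2); lia).
  unfold nch, nchild. simpl Nat.eqb. cbv iota.
  replace (Nat.even (S (S n))) with (Nat.even n) by reflexivity.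
  rewrite Nat.even_succ, <- Nat.negb_even. destruct (Nat.even n); simpl; lra.
Qed.

Lemma aa_SS n : aa (S (S n)) <= aa n / 2.
Proof.
  unfold aa. rewrite !prodk_snoc. pose proof (prodk_pos 1 n).
  pose proof (nch_two n). replace (1 + S n)%nat with (S (S n)) by lia.
  replace (1 + n)%nat with (S n) by lia.
  replace (/ prodk 1 n / 2) with (/ (prodk 1 n * 2)) by (field; lra).
  apply Rinv_le_contravar. lra. rewrite Rmult_assoc. apply Rmult_le_compat_l; lra.
Qed.

Lemma aa_pos n : 0 < aa n.
Proof. unfold aa. apply Rinv_0_lt_compat, prodk_pos. Qed.

Lemma geom D : forall m, lsum aa (seq m D) <= 4 * aa m /\ lsum aa (seq m (S D)) <= 4 * aa m.
Proof.
  induction D; intros m.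
  - pose proof (aa_pos m). unfold lsum; simpl. lra.
  - split. apply IHD.
    destruct (IHD (S (S m))) as [H _].
    pose proof (aa_S m). pose proof (aa_SS m). pose proof (aa_pos m).
    unfold lsum in *. simpl. simpl in H. lra.
Qed.

Lemma len_le_max (l : list (list nat)) e : In e l -> (length e <= fold_right max 0%nat (map (@length nat) l))%nat.
Proof.
  induction l; simpl. tauto. intros [<-|H]. lia. specialize (IHl H). lia.
Qed.

Lemma alpha_L2 (l : list (list nat)) : NoDup l -> (forall e, In e l -> edge dB dR e) ->
  lsum (fun e => alpha e * alpha e) l <= 4 * INR (S dR).
Proof.
  intros Hn He.
  set (D := fold_right max 0%nat (map (@length nat) l)).
  set (L := flat_map (fun n => words 0 (S n)) (seq 0 D)).
  assert (Hi : incl l L).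
  { intros e Hel. destruct (He e Hel) as [Hv Hne].
    pose proof (len_le_max l e Hel) as Hlen. fold D in Hlen.
    destruct e as [|i w]. congruence.
    apply in_flat_map. exists (length w). split.
    apply in_seq. simpl in Hlen. lia.
    apply (words_complete (i :: w) 0 Hv). }
  eapply Rle_trans. apply (lsum_incl _ (list_eq_dec Nat.eq_dec)); auto.
  intros x; apply Rle_0_sqr. exact Hi.
  unfold L. rewrite lsum_flat_map.
  eapply Rle_trans. apply (lsum_le _ (fun n => INR (S dR) * aa n)).
  intros n _. apply level_bound.
  rewrite lsum_scal. destruct (geom D 0) as [G _].
  unfold aa in G at 2. simpl in G. rewrite Rinv_1 in G.
  pose proof (pos_INR (S dR)). nra.
Qed.

Variable k : Z.
Hypothesis Hk : (1 <= k)%Z.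
Let w := IZR k * PI.

Lemma w_pos : 0 < w.
Proof. unfold w. pose proof PI_RGT_0. assert (1 <= IZR k) by (apply IZR_le; auto). nra. Qed.

Lemma sin_w : sin w = 0.
Proof. apply sin_eq_0_1. exists k. reflexivity. Qed.

Definition ftree (e : list nat) (x : R) : C := RtoC (alpha e * (sin (w * x) / w)).
Definition gtree (e : list nat) (x : R) : C := RtoC (alpha e * cos (w * x)).

Lemma ftree_der e x : is_derive (V := prod_NormedModule R_AbsRing R_NormedModule R_NormedModule)
  (ftree e) x (gtree e x).
Proof.
  pose proof w_pos. apply is_derive_RtoC. auto_derive; auto. field. lra.
Qed.

Lemma gtree_der e x : is_derive (V := prod_NormedModule R_AbsRing R_NormedModule R_NormedModule)
  (gtree e) x (Copp (Cmult (RtoC (w^2)) (ftree e x))).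
Proof.
  pose proof w_pos. eapply is_derive_valV. apply is_derive_RtoC. auto_derive; auto.
  unfold ftree. apply Ceq; simpl; field; lra.
Qed.

Lemma tree_eig : tree_eigenvalue dB dR (RtoC (w^2)).
Proof.
  pose proof w_pos as Hw.
  exists ftree, gtree. split; [|split; [|split]].
  - intros e _. split; [|split; [|split; [|split]]].
    + intros x _. split. apply ftree_der. apply gtree_der.
    + apply filterlim_right0. exists (gtree e 0). apply ftree_der.
    + apply filterlim_right0. eexists. apply gtree_der.
    + apply filterlim_left1. exists (gtree e 1). apply ftree_der.
    + apply filterlim_left1. eexists. apply gtree_der.
  - intros v _. split.
    + assert (Hz : forall e, ftree e (endpt v) = RtoC 0).
      { intros e. unfold ftree, endpt. destruct (Nat.even (length v)).
        rewrite Rmult_0_r, sin_0. apply Ceq; simpl; field; lra.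
        rewrite Rmult_1_r, sin_w. apply Ceq; simpl; field; lra. }
      intros e1 e2 _ _. rewrite !Hz. auto.
    + set (kap := if Nat.even (length v) then 1 else - cos w).
      rewrite (map_ext _ (fun e => RtoC (kap * alpha e))).
      * rewrite Csum_RtoC, lsum_scal, kirchhoff_sum. apply Ceq; simpl; ring.
      * intros e. unfold outder, gtree, kap. destruct (Nat.even (length v)); apply Ceq; simpl.
        rewrite Rmult_0_r, cos_0. ring. ring. rewrite Rmult_1_r. ring. ring.
  - set (I := RInt (fun x => (sin (w * x) / w) ^ 2) 0 1).
    exists (Rabs I * (4 * INR (S dR))). intros l Hn He.
    rewrite (map_ext _ (fun e => alpha e * alpha e * I)).
    2: { intros e. unfold I. rewrite <- RInt_scalR.
         apply RInt_ext. intros x _. unfold ftree. rewrite Cmod_R, pow2_abs. Req. ring.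
         apply (ex_RInt_continuous (V:=R_CompleteNormedModule)). intros z _.
         apply (ex_derive_continuous (K:=R_AbsRing) (V:=R_NormedModule)). auto_derive; auto. }
    fold (lsum (fun e => alpha e * alpha e * I) l).
    rewrite (lsum_ext _ (fun e => I * (alpha e * alpha e))) by (intros; ring).
    rewrite lsum_scal. pose proof (alpha_L2 l Hn He) as HL.
    assert (0 <= lsum (fun e => alpha e * alpha e) l) by (apply lsum_nonneg; intros; apply Rle_0_sqr).
    pose proof (Rle_abs I). pose proof (Rabs_pos I).
    apply Rle_trans with (Rabs I * lsum (fun e => alpha e * alpha e) l). nra.
    apply Rmult_le_compat_l; auto.
  - exists [0%nat], (/ (2 * IZR k)). split; [|split].
    + split. simpl. unfold vertex. simpl. split; auto. unfold nchild. simpl. lia. congruence.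
    + assert (1 <= IZR k) by (apply IZR_le; auto). split.
      left; apply Rinv_0_lt_compat; lra.
      replace 1 with (/ 1) by field. apply Rinv_le_contravar; lra.
    + unfold ftree. assert (1 <= IZR k) by (apply IZR_le; auto).
      replace (w * / (2 * IZR k)) with (PI / 2) by (unfold w; field; lra).
      rewrite sin_PI2. unfold alpha. simpl. unfold sig. simpl.
      intros E. injection E as E. apply (f_equal (fun t => t * w)) in E.
      field_simplify in E; lra.
Qed.

End Tree.

Lemma part5 dB dR : (1 <= dB)%nat -> (1 <= dR)%nat ->
  forall lam : C, sigma2 dB dR lam ->
     (exists x, 0 <= x <= 1 /\ Ufun dB dR lam x <> RtoC 0) ->
     (exists x, 0 <= x <= 1 /\ Vfun dB dR lam x <> RtoC 0) ->
     tree_eigenvalue dB dR lam.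
Proof.
  intros H1 H2 lam Hs [xu [_ HU]] [xv [_ HV]].
  destruct (sig2_sc _ _ _ H1 H2 Hs) as [E|E].
  - destruct (s_zero_char lam E) as (Hr & Hp & k & Hk & Hw).
    assert (Hprod : (2 <= dR * dB)%nat).
    { destruct (Nat.le_gt_cases 2 (dR * dB)) as [L|L]; auto. exfalso.
      assert (dB = 1%nat) by nia. assert (dR = 1%nat) by nia. subst.
      apply (proj1 Hs). exists (RtoC 1). split.
      apply eig_s0; auto. apply Ceq; simpl; ring.
      rewrite Cmod_R, Rabs_R1. unfold Defs.bound. simpl. rewrite Rmult_1_r, sqrt_1, Rinv_1. auto. }
    assert (Hl : lam = RtoC ((IZR k * PI) ^ 2)).
    { apply Ceq; simpl; auto. rewrite <- Hw. rewrite Rmult_1_r. rewrite sqrt_sqrt; lra. }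
    rewrite Hl. apply (tree_eig dB dR H1 H2 Hprod k Hk).
  - destruct (c0_excl _ _ _ H1 H2 (proj1 Hs) E) as [Z|Z].
    + exfalso. apply HU. apply Z.
    + exfalso. apply HV. apply Z.
Qed.

Theorem lemma4p5 (dB dR : nat) (HdB : (1 <= dB)%nat) (HdR : (1 <= dR)%nat) :
  (forall lam : C, sigma2 dB dR lam -> snd lam = 0) /\
  (forall lam : C, sigma2 dB dR lam ->
     exists eps : R, 0 < eps /\
       forall mu : C, sigma2 dB dR mu -> Cmod (Cminus mu lam) < eps -> mu = lam) /\
  ((1 < dR * dB)%nat -> forall lam : C, ss lam = RtoC 0 -> sigma2 dB dR lam) /\
  (forall lam : C, ~ sigma1 dB dR lam -> ss lam = RtoC 0 ->
     (exists x, 0 <= x <= 1 /\ Ufun dB dR lam x <> RtoC 0) /\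
     (exists x, 0 <= x <= 1 /\ Vfun dB dR lam x <> RtoC 0)) /\
  (forall lam : C, sigma2 dB dR lam ->
     (exists x, 0 <= x <= 1 /\ Ufun dB dR lam x <> RtoC 0) ->
     (exists x, 0 <= x <= 1 /\ Vfun dB dR lam x <> RtoC 0) ->
     tree_eigenvalue dB dR lam).
Proof.
  split. apply part1; auto.
  split. apply part2; auto.
  split. intros H. apply part3; auto.
  split. apply part4; auto.
  apply part5; auto.
Qed.
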